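(* Run the distributed regularized primal-dual algorithm described in the context for $T$ iterations with stepsize $\alpha(t)=\frac{R}{\sqrt{t+1}}$ and regularization parameter $\eta>0$ satisfying $\eta\alpha(t)\le\frac12$ for all $t\in[T]$. Then, as $T\to\infty$, \[ \left\|\left[\frac1n\sum_{i=1}^n g(\widehat{x}_i(T))\right]_+\right\|_2^2=\mathcal{O}(\eta). \] Furthermore, if the optimal solution $x_\ast$ is strictly feasible, i.e. $g_k(x_\ast)<0$ for all $k$, then \[ \left\|\left[\frac1n\sum_{i=1}^n g(\widehat{x}_i(T))\right]_+\right\|_2^2=\mathcal{O}\!\left(\frac{\eta\log(T)}{\sqrt{T}}\right). \]
   Context: $[v]_+$ denotes the componentwise positive part $\max\{0,v\}$. Norms are Euclidean. Problem: minimize $f(x)=\frac1n\sum_{i=1}^n f_i(x)$ over $\mathcal{X}=\{x\in\mathbb{R}^d: g_k(x)\le 0,\ k=1,\dots,m\}$; write $g=(g_1,\dots,g_m)^T$. Assumptions: $\mathcal{X}$ is non-empty, convex and compact; $R$ is the smallest radius with $\mathcal{X}\subseteq \mathbb{B}_d(R)=\{x:\|x\|\le R\}$; there is a Slater vector $\tilde x$ with $g_k(\tilde x)<0$ for all $k$; all $f_i$ and $g_k$ are convex on $\mathbb{B}_d(R)$ and all their subgradients there satisfy $\|\nabla f_i(x)\|\le L$, $\|\nabla g_k(x)\|\le L$. $x_\ast$ denotes an optimal solution. Agents $1,\dots,n$ are nodes of a connected graph $G=(V,E)$; $W\in\mathbb{R}^{n\times n}$ is doubly stochastic with $W_{ij}>0$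 if $(i,j)\in E$ and $W_{ij}=0$ if $(i,j)\notin E$. Regularized Lagrangian of agent $i$: $L_i(x,\lambda)=f_i(x)+\langle\lambda,g(x)\rangle-\frac{\eta}{2}\|\lambda\|^2$, with subgradients $\nabla_xL_i(x,\lambda)=\nabla f_i(x)+\sum_{k=1}^m\lambda_k\nabla g_k(x)$ and $\nabla_\lambda L_i(x,\lambda)=g(x)-\eta\lambda$. Algorithm: $x_i(0)=0$, $\lambda_i(0)=0$; for $t=0,1,2,\dots$: $y_i(t)=x_i(t)-\alpha(t)\nabla_xL_i(x_i(t),\lambda_i(t))$, $\gamma_i(t)=\lambda_i(t)+\alpha(t)\nabla_\lambda L_i(x_i(t),\lambda_i(t))$, $x_i(t+1)=\Pi_{\mathbb{B}_d(R)}(\sum_j W_{ij}y_j(t))$, $\lambda_i(t+1)=\Pi_{\mathbb{R}^m_+}(\sum_jW_{ij}\gamma_j(t))$, where $\Pi$ denotes Euclidean projection. The estimate is $\widehat{x}_i(T)=\sum_{t=0}^{T-1}\alpha(t)x_i(t)/\sum_{t=0}^{T-1}\alpha(t)$. *)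

(* Defs.v *)
From mathcomp Require Import all_boot all_order all_algebra.
From mathcomp Require Import all_classical all_reals all_analysis.
Set Implicit Arguments. Unset Strict Implicit. Unset Printing Implicit Defensive.
Import Order.TTheory GRing.Theory Num.Theory numFieldNormedType.Exports.
Local Open Scope ring_scope.

Section Defs.
Variable R : realType.

Definition dotv (k : nat) (u v : 'rV[R]_k) : R := \sum_(j < k) u ord0 j * v ord0 j.
Definition enorm (k : nat) (v : 'rV[R]_k) : R := Num.sqrt (dotv v v).

Definition inball (k : nat) (r : R) (x : 'rV[R]_k) : Prop := enorm x <= r.

Definition proj_ball (k : nat) (r : R) (v : 'rV[R]_k) : 'rV[R]_k :=
  if enorm v <= r then v else (r / enorm v) *: v.

Definition pospart (k : nat) (v : 'rV[R]_k) : 'rV[R]_k :=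
  map_mx (fun a => Num.max 0 a) v.

Definition convex_on (k : nat) (S : 'rV[R]_k -> Prop) (h : 'rV[R]_k -> R) : Prop :=
  forall x y (t : R), S x -> S y -> 0 <= t -> t <= 1 ->
    h (t *: x + (1 - t) *: y) <= t * h x + (1 - t) * h y.

Definition convex_setP (k : nat) (S : 'rV[R]_k -> Prop) : Prop :=
  forall x y (t : R), S x -> S y -> 0 <= t -> t <= 1 -> S (t *: x + (1 - t) *: y).

Definition subgrad_on (k : nat) (S : 'rV[R]_k -> Prop) (h : 'rV[R]_k -> R)
  (x v : 'rV[R]_k) : Prop :=
  forall y, S y -> h x + dotv v (y - x) <= h y.

Definition gvec (m d : nat) (g : 'I_m -> 'rV[R]_d -> R) (x : 'rV[R]_d) : 'rV[R]_m :=
  \row_k g k x.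

Definition feasible (m d : nat) (g : 'I_m -> 'rV[R]_d -> R) (x : 'rV[R]_d) : Prop :=
  forall k, g k x <= 0.

Definition favg (n d : nat) (f : 'I_n -> 'rV[R]_d -> R) (x : 'rV[R]_d) : R :=
  n%:R^-1 * \sum_(i < n) f i x.

Definition alpha (Rad : R) (t : nat) : R := Rad / Num.sqrt (t.+1)%:R.

Section Algo.
Variables (n m d : nat) (W : 'M[R]_n) (Rad eta : R).
Variables (df : 'I_n -> 'rV[R]_d -> 'rV[R]_d) (g : 'I_m -> 'rV[R]_d -> R)
          (dg : 'I_m -> 'rV[R]_d -> 'rV[R]_d).

(* subgradients of the regularized Lagrangian L_i *)
Definition gradx (i : 'I_n) (x : 'rV[R]_d) (lam : 'rV[R]_m) : 'rV[R]_d :=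
  df i x + \sum_(k < m) lam ord0 k *: dg k x.
Definition gradlam (x : 'rV[R]_d) (lam : 'rV[R]_m) : 'rV[R]_m :=
  gvec g x - eta *: lam.

Definition algo_step (t : nat) (s : 'I_n -> 'rV[R]_d * 'rV[R]_m) :
    'I_n -> 'rV[R]_d * 'rV[R]_m :=
  let y := fun j => (s j).1 - alpha Rad t *: gradx j (s j).1 (s j).2 in
  let gam := fun j => (s j).2 + alpha Rad t *: gradlam (s j).1 (s j).2 in
  fun i => (proj_ball Rad (\sum_(j < n) W i j *: y j),
            pospart (\sum_(j < n) W i j *: gam j)).

Fixpoint algo_state (t : nat) : 'I_n -> 'rV[R]_d * 'rV[R]_m :=
  match t with
  | 0 => fun _ => (0, 0)
  | t'.+1 => algo_step t' (algo_state t')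
  end.

Definition xs_iter (t : nat) (i : 'I_n) : 'rV[R]_d := (algo_state t i).1.

Definition xhat (T : nat) (i : 'I_n) : 'rV[R]_d :=
  (\sum_(t < T) alpha Rad t)^-1 *: \sum_(t < T) alpha Rad t *: xs_iter t i.

Definition violation (T : nat) : R :=
  enorm (pospart (n%:R^-1 *: \sum_(i < n) gvec g (xhat T i))) ^+ 2.
End Algo.

End Defs.

(* Main.v *)
Require Import Defs.
From mathcomp Require Import all_boot all_order all_algebra.
From mathcomp Require Import all_classical all_reals all_analysis.
From mathcomp Require Import ring lra zify.
Import Order.TTheory GRing.Theory Num.Theory numFieldNormedType.Exports.
Local Open Scope ring_scope.
Set Implicit Arguments. Unset Strict Implicit. Unset Printing Implicit Defensive.

Section Vec.
Variable R : realType.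
Implicit Types (k : nat).

Definition sq k (v : 'rV[R]_k) := dotv v v.

Lemma dotvE k (u v : 'rV[R]_k) : dotv u v = \sum_(j < k) u ord0 j * v ord0 j.
Proof. by []. Qed.

Lemma dotvC k (u v : 'rV[R]_k) : dotv u v = dotv v u.
Proof. by rewrite /dotv; apply: eq_bigr => j _; rewrite mulrC. Qed.

Lemma dotvDl k (u v w : 'rV[R]_k) : dotv (u + v) w = dotv u w + dotv v w.
Proof. by rewrite /dotv -big_split; apply: eq_bigr => j _; rewrite !mxE mulrDl. Qed.

Lemma dotvDr k (u v w : 'rV[R]_k) : dotv w (u + v) = dotv w u + dotv w v.
Proof. by rewrite dotvC dotvDl !(dotvC w). Qed.

Lemma dotvZl k a (u w : 'rV[R]_k) : dotv (a *: u) w = a * dotv u w.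
Proof. by rewrite /dotv mulr_sumr; apply: eq_bigr => j _; rewrite !mxE mulrA. Qed.

Lemma dotvZr k a (u w : 'rV[R]_k) : dotv w (a *: u) = a * dotv w u.
Proof. by rewrite dotvC dotvZl dotvC. Qed.

Lemma dotvNl k (u w : 'rV[R]_k) : dotv (- u) w = - dotv u w.
Proof. by rewrite -scaleN1r dotvZl mulN1r. Qed.

Lemma dotvNr k (u w : 'rV[R]_k) : dotv w (- u) = - dotv w u.
Proof. by rewrite dotvC dotvNl dotvC. Qed.

Lemma dotvBl k (u v w : 'rV[R]_k) : dotv (u - v) w = dotv u w - dotv v w.
Proof. by rewrite dotvDl dotvNl. Qed.

Lemma dotvBr k (u v w : 'rV[R]_k) : dotv w (u - v) = dotv w u - dotv w v.
Proof. by rewrite dotvDr dotvNr. Qed.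

Lemma dotv0l k (w : 'rV[R]_k) : dotv 0 w = 0.
Proof. by rewrite /dotv big1 // => j _; rewrite mxE mul0r. Qed.

Lemma dotv0r k (w : 'rV[R]_k) : dotv w 0 = 0.
Proof. by rewrite dotvC dotv0l. Qed.

Lemma dotv_suml k (I : finType) (F : I -> 'rV[R]_k) w :
  dotv (\sum_i F i) w = \sum_i dotv (F i) w.
Proof.
rewrite /dotv exchange_big /=; apply: eq_bigr => j _.
by rewrite summxE mulr_suml.
Qed.

Lemma dotv_sumr k (I : finType) (F : I -> 'rV[R]_k) w :
  dotv w (\sum_i F i) = \sum_i dotv w (F i).
Proof. by rewrite dotvC dotv_suml; apply: eq_bigr => i _; rewrite dotvC. Qed.

Lemma sq_ge0 k (v : 'rV[R]_k) : 0 <= sq v.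
Proof. by apply: sumr_ge0 => j _; rewrite -expr2 sqr_ge0. Qed.

Lemma sq_eq0 k (v : 'rV[R]_k) : sq v = 0 -> v = 0.
Proof.
move=> h; apply/rowP => j; rewrite mxE.
have : v ord0 j ^+ 2 = 0.
  apply/eqP; rewrite eq_le sqr_ge0 andbT -h /sq /dotv (bigD1 j) //= -expr2.
  by rewrite lerDl; apply: sumr_ge0 => i _; rewrite -expr2 sqr_ge0.
by move/eqP; rewrite sqrf_eq0 => /eqP.
Qed.

Lemma enorm_ge0 k (v : 'rV[R]_k) : 0 <= enorm v.
Proof. exact: sqrtr_ge0. Qed.

Lemma enorm_sq k (v : 'rV[R]_k) : enorm v ^+ 2 = sq v.
Proof. by rewrite /enorm sqr_sqrtr // sq_ge0. Qed.

Lemma sq_D k (u v : 'rV[R]_k) : sq (u + v) = sq u + 2 * dotv u v + sq v.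
Proof. rewrite /sq !dotvDl !dotvDr (dotvC v u); ring. Qed.

Lemma sq_B k (u v : 'rV[R]_k) : sq (u - v) = sq u - 2 * dotv u v + sq v.
Proof. rewrite /sq !dotvBl !dotvBr (dotvC v u); ring. Qed.

Lemma sq_Z k a (u : 'rV[R]_k) : sq (a *: u) = a ^+ 2 * sq u.
Proof. rewrite /sq dotvZl dotvZr; ring. Qed.

Lemma sq_N k (u : 'rV[R]_k) : sq (- u) = sq u.
Proof. rewrite /sq dotvNl dotvNr; ring. Qed.

Lemma CS2 k (u v : 'rV[R]_k) : dotv u v ^+ 2 <= sq u * sq v.
Proof.
have [v0|vn0] := eqVneq (sq v) 0.
  by move: (sq_eq0 v0) => ->; rewrite dotv0r /sq dotv0r expr0n /= mulr0.
have vp : 0 < sq v by rewrite lt_def vn0 sq_ge0.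
set t := dotv u v / sq v.
have := sq_ge0 (u - t *: v); rewrite sq_B sq_Z dotvZr /t => h.
have e : sq u - 2 * (dotv u v / sq v * dotv u v) + (dotv u v / sq v) ^+ 2 * sq v
   = (sq u * sq v - dotv u v ^+ 2) / sq v.
  by field; rewrite vn0.
rewrite e in h; rewrite -subr_ge0.
by move: h; rewrite pmulr_lge0 // invr_gt0.
Qed.

Lemma CS k (u v : 'rV[R]_k) : dotv u v <= enorm u * enorm v.
Proof.
rewrite /enorm -sqrtrM ?sq_ge0 //.
apply: le_trans (ler_norm _) _.
by rewrite -sqrtr_sqr ler_sqrt ?CS2 // mulr_ge0 // sq_ge0.
Qed.

Lemma CSabs k (u v : 'rV[R]_k) : `|dotv u v| <= enorm u * enorm v.
Proof.
rewrite ler_norml CS andbT lerNl -dotvNl.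
apply: le_trans (CS _ _) _.
by rewrite /enorm dotvNl dotvNr opprK.
Qed.

Lemma enorm_sq_le k (v : 'rV[R]_k) r : 0 <= r -> (enorm v <= r) = (sq v <= r ^+ 2).
Proof.
move=> r0; rewrite /enorm -{1}(ger0_norm r0) -sqrtr_sqr ler_sqrt ?sqr_ge0 //.
Qed.

Lemma enormZ k a (v : 'rV[R]_k) : enorm (a *: v) = `|a| * enorm v.
Proof. by rewrite /enorm -[dotv _ _]/(sq _) sq_Z sqrtrM ?sqr_ge0 // sqrtr_sqr. Qed.

Lemma enormN k (v : 'rV[R]_k) : enorm (- v) = enorm v.
Proof. by rewrite /enorm -[dotv _ _]/(sq _) sq_N. Qed.

Lemma enorm0 k : enorm (0 : 'rV[R]_k) = 0.
Proof. by rewrite /enorm dotv0l sqrtr0. Qed.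

Lemma enormD k (u v : 'rV[R]_k) : enorm (u + v) <= enorm u + enorm v.
Proof.
rewrite enorm_sq_le ?addr_ge0 ?enorm_ge0 // sq_D.
rewrite sqrrD !enorm_sq -mulr_natl; have := CS u v; lra.
Qed.

Lemma enormB k (u v : 'rV[R]_k) : enorm (u - v) <= enorm u + enorm v.
Proof. by apply: le_trans (enormD _ _) _; rewrite enormN. Qed.

Lemma enorm_sum k (I : finType) (P : pred I) (F : I -> 'rV[R]_k) :
  enorm (\sum_(i | P i) F i) <= \sum_(i | P i) enorm (F i).
Proof.
elim/big_rec2: _ => [|i y x _ h]; first by rewrite enorm0.
by apply: le_trans (enormD _ _) _; rewrite lerD2l.
Qed.

Lemma enorm_sub_ge k (u v : 'rV[R]_k) : enorm u - enorm v <= enorm (u - v).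
Proof.
rewrite lerBlDr; have := enormD (u - v) v; by rewrite subrK.
Qed.

Lemma jensen_scalar (I : finType) (w a : I -> R) :
  (forall i, 0 <= w i) -> \sum_i w i = 1 ->
  (\sum_i w i * a i) ^+ 2 <= \sum_i w i * a i ^+ 2.
Proof.
move=> w0 w1; set mu := \sum_i w i * a i.
have : 0 <= \sum_i w i * (a i - mu) ^+ 2.
  by apply: sumr_ge0 => i _; rewrite mulr_ge0 ?sqr_ge0.
have -> : \sum_i w i * (a i - mu) ^+ 2
   = \sum_i w i * a i ^+ 2 - 2 * mu * (\sum_i w i * a i) + mu ^+ 2 * \sum_i w i.
  rewrite (eq_bigr (fun i => w i * a i ^+ 2 - 2 * mu * (w i * a i) + mu ^+ 2 * w i)).
    by rewrite big_split sumrB /= -!mulr_sumr.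
  by move=> i _; ring.
by rewrite w1 -/mu; move=> h; rewrite -subr_ge0; apply: le_trans h _; lra.
Qed.

Lemma jensen_sq k (I : finType) (w : I -> R) (u : I -> 'rV[R]_k) :
  (forall i, 0 <= w i) -> \sum_i w i = 1 ->
  sq (\sum_i w i *: u i) <= \sum_i w i * sq (u i).
Proof.
move=> w0 w1.
rewrite /sq /dotv.
under eq_bigr do rewrite summxE -expr2.
under [X in _ <= X]eq_bigr do rewrite mulr_sumr.
rewrite exchange_big /=; apply: ler_sum => j _.
under eq_bigr do rewrite mxE.
under [X in _ <= X]eq_bigr do rewrite -expr2.
exact: jensen_scalar.
Qed.

End Vec.

Section Proj.
Variable R : realType.

Lemma proj_in k r (v : 'rV[R]_k) : 0 <= r -> enorm (proj_ball r v) <= r.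
Proof.
move=> r0; rewrite /proj_ball; case: ifP => // /negbT; rewrite -ltNge => h.
have N0 : 0 < enorm v by apply: le_lt_trans h.
rewrite enormZ ger0_norm ?divr_ge0 ?enorm_ge0 // divfK //.
by rewrite gt_eqF.
Qed.

Lemma proj_nonexp k r (v z : 'rV[R]_k) : 0 <= r -> enorm z <= r ->
  sq (proj_ball r v - z) <= sq (v - z).
Proof.
move=> r0 zr; rewrite /proj_ball; case: ifP => // /negbT; rewrite -ltNge => h.
set N := enorm v.
have N0 : 0 < N by apply: le_lt_trans h.
set s := r / N.
have sN : s * N = r by rewrite /s divfK // gt_eqF.
have s0 : 0 <= s by rewrite divr_ge0 // enorm_ge0.
have s1 : s <= 1 by rewrite /s ler_pdivrMr // mul1r ltW.
have D : dotv v z <= N * r.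
  apply: le_trans (CS _ _) _; by rewrite ler_wpM2l // enorm_ge0.
rewrite !sq_B sq_Z dotvZl -(enorm_sq v) -/N.
rewrite -sN in D.
have h1 : 0 <= (1 - s) * (N * (s * N) - dotv v z) by rewrite mulr_ge0 // subr_ge0.
have h2 : 0 <= ((1 - s) * N) ^+ 2 by rewrite sqr_ge0.
nra.
Qed.

Lemma proj_dist k r (v w : 'rV[R]_k) : enorm w <= r ->
  enorm (proj_ball r v - v) <= enorm (v - w).
Proof.
move=> wr; rewrite /proj_ball; case: ifP => [_|/negbT].
  by rewrite subrr enorm0 enorm_ge0.
rewrite -ltNge => h.
have r0 : 0 <= r by apply: le_trans wr; exact: enorm_ge0.
set N := enorm v.
have N0 : 0 < N by apply: le_lt_trans h.
have -> : (r / N) *: v - v = (r / N - 1) *: v by rewrite scalerBl scale1r.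
rewrite enormZ ler0_norm; last by rewrite subr_le0 ler_pdivrMr // mul1r ltW.
rewrite opprB mulrBl mul1r divfK ?gt_eqF //.
apply: le_trans (enorm_sub_ge _ _); by rewrite lerB.
Qed.

Lemma pospartE k (v : 'rV[R]_k) j : pospart v ord0 j = Num.max 0 (v ord0 j).
Proof. by rewrite mxE. Qed.

Lemma max0_ge0 (a : R) : 0 <= Num.max 0 a.
Proof. by rewrite le_max lexx. Qed.

Lemma max0_le (a B : R) : 0 <= B -> a <= B -> Num.max 0 a <= B.
Proof. by move=> B0 aB; rewrite ge_max B0 aB. Qed.

Lemma max0_ge (a : R) : a <= Num.max 0 a.
Proof. by rewrite le_max lexx orbT. Qed.

Lemma max0_sq (a b : R) : 0 <= b -> (Num.max 0 a - b) ^+ 2 <= (a - b) ^+ 2.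
Proof.
move=> b0; case: (leP 0 a) => a0 //; nra.
Qed.

Lemma pospart_nonexp k (v l : 'rV[R]_k) : (forall j, 0 <= l ord0 j) ->
  sq (pospart v - l) <= sq (v - l).
Proof.
move=> l0; rewrite /sq /dotv; apply: ler_sum => j _.
rewrite !mxE -!expr2; exact: max0_sq.
Qed.

End Proj.

Section Algo.
Variables (R : realType) (n m d : nat) (W : 'M[R]_n) (Rad eta L : R)
  (f : 'I_n -> 'rV[R]_d -> R) (df : 'I_n -> 'rV[R]_d -> 'rV[R]_d)
  (g : 'I_m -> 'rV[R]_d -> R) (dg : 'I_m -> 'rV[R]_d -> 'rV[R]_d).

Hypothesis Rad0 : 0 <= Rad.
Hypothesis eta0 : 0 < eta.
Hypothesis Hea : forall t, eta * alpha Rad t <= 1 / 2.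
Hypothesis HW0 : forall i j, 0 <= W i j.
Hypothesis HWr : forall i, \sum_j W i j = 1.
Hypothesis HWc : forall j, \sum_i W i j = 1.
Hypothesis Hdf : forall i x, inball Rad x -> subgrad_on (inball Rad) (f i) x (df i x).
Hypothesis Hdg : forall k x, inball Rad x -> subgrad_on (inball Rad) (g k) x (dg k x).
Hypothesis HLf : forall i x, inball Rad x -> enorm (df i x) <= L.
Hypothesis HLg : forall k x, inball Rad x -> enorm (dg k x) <= L.

Local Notation st t := (algo_state W Rad eta df g dg t).
Local Notation x t i := (st t i).1.
Local Notation lam t i := (st t i).2.
Local Notation a t := (alpha Rad t).
Local Notation gx i xx ll := (gradx df dg i xx ll).
Local Notation gl xx ll := (gradlam eta g xx ll).

Lemma eqle (u v : R) : u = v -> u <= v.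
Proof. by move->. Qed.

Lemma a_ge0 t : 0 <= a t.
Proof. by rewrite /alpha divr_ge0 // sqrtr_ge0. Qed.

Lemma a_le s t : (s <= t)%N -> a t <= a s.
Proof.
move=> st; rewrite /alpha ler_wpM2l // lef_pV2 ?posrE ?sqrtr_gt0 ?ltr0n //.
by rewrite ler_sqrt ?ler_nat ?ltS //= ler0n.
Qed.

Lemma stepE t i : st t.+1 i =
  (proj_ball Rad (\sum_j W i j *: (x t j - a t *: gx j (x t j) (lam t j))),
   pospart (\sum_j W i j *: (lam t j + a t *: gl (x t j) (lam t j)))).
Proof. by []. Qed.

Lemma x_in t i : enorm (x t i) <= Rad.
Proof.
case: t => [|t]; first by rewrite /= enorm0.
by rewrite stepE /=; apply: proj_in.
Qed.

Lemma x_inb t i : inball Rad (x t i).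
Proof. exact: x_in. Qed.

Lemma inball0 : inball Rad (0 : 'rV[R]_d).
Proof. by rewrite /inball enorm0. Qed.

Lemma ball_avg (I : finType) (w : I -> R) (p : I -> 'rV[R]_d) :
  (forall i, 0 <= w i) -> \sum_i w i = 1 -> (forall i, enorm (p i) <= Rad) ->
  enorm (\sum_i w i *: p i) <= Rad.
Proof.
move=> w0 w1 pin; rewrite enorm_sq_le //.
apply: le_trans (jensen_sq _ w0 w1) _.
apply: le_trans (_ : \sum_i w i * Rad ^+ 2 <= _); last by rewrite -mulr_suml w1 mul1r.
apply: ler_sum => i _; apply: ler_wpM2l => //.
by rewrite -enorm_sq_le.
Qed.

Lemma dot_bound (u v : 'rV[R]_d) A B : enorm u <= A -> enorm v <= B ->
  `|dotv u v| <= A * B.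
Proof.
move=> uA vB; apply: le_trans (CSabs _ _) _.
by apply: ler_pM => //; exact: enorm_ge0.
Qed.

Definition Gk k := `|g k 0| + L * Rad.

Lemma L_ge0 (k : 'I_m) : 0 <= L.
Proof. by apply: le_trans (HLg k inball0); exact: enorm_ge0. Qed.

Lemma g_bound k y : inball Rad y -> `|g k y| <= Gk k.
Proof.
move=> yin; rewrite /Gk ler_norml; apply/andP; split.
- have := Hdg k inball0 yin; rewrite subr0 => h.
  have := dot_bound (HLg k inball0) yin; rewrite ler_norml => /andP [h1 _].
  have : - `|g k 0| <= g k 0 by rewrite lerNl; apply: le_trans (ler_norm _) _; rewrite normrN.
  lra.
- have := Hdg k yin inball0; rewrite sub0r dotvNr => h.
  have := dot_bound (HLg k yin) yin; rewrite ler_norml => /andP [_ h1].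
  have := ler_norm (g k 0). lra.
Qed.

Definition G := \sum_k Gk k.

Lemma Gk_le k : Gk k <= G.
Proof.
rewrite /G (bigD1 k) //= lerDl; apply: sumr_ge0 => j _.
by rewrite /Gk addr_ge0 // mulr_ge0 // L_ge0.
Qed.

Lemma G_ge0 : 0 <= G.
Proof.
by apply: sumr_ge0 => j _; rewrite /Gk addr_ge0 // mulr_ge0 // L_ge0.
Qed.

Lemma g_boundG k y : inball Rad y -> `|g k y| <= G.
Proof. by move=> yin; apply: le_trans (g_bound k yin) (Gk_le k). Qed.

Lemma sum_mx_entry (I : finType) (w : I -> R) (v : I -> 'rV[R]_m) k :
  (\sum_i w i *: v i) ord0 k = \sum_i w i * v i ord0 k.
Proof. by rewrite summxE; apply: eq_bigr => i _; rewrite mxE. Qed.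

Lemma lam_bound t i k : 0 <= lam t i ord0 k <= G / eta.
Proof.
elim: t i => [|t IH] i.
  by rewrite /= mxE lexx divr_ge0 // ?G_ge0 // ltW.
rewrite stepE /= pospartE max0_ge0 /=; apply: max0_le.
  by rewrite divr_ge0 // ?G_ge0 // ltW.
rewrite sum_mx_entry.
apply: le_trans (_ : \sum_j W i j * (G / eta) <= _); last by rewrite -mulr_suml HWr mul1r.
apply: ler_sum => j _; apply: ler_wpM2l => //.
rewrite !mxE.
have /andP [l0 l1] := IH j.
have gb := g_boundG k (x_inb t j); rewrite ler_norml in gb.
case/andP: gb => _ gb.
have ha := Hea t; have a0 := a_ge0 t.
have e : G / eta = (1 - a t * eta) * (G / eta) + a t * G.
  by field; rewrite gt_eqF.
rewrite e.
have : (1 - a t * eta) * lam t j ord0 k <= (1 - a t * eta) * (G / eta).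
  by apply: ler_wpM2l => //; lra.
have : a t * g k (x t j) <= a t * G by apply: ler_wpM2l.
set l := lam t j ord0 k. set gg := g k (x t j).
move=> h1 h2.
have -> : l + a t * (gg - eta * l) = (1 - a t * eta) * l + a t * gg by ring.
lra.
Qed.


Lemma dot_gvec (l : 'rV[R]_m) y : dotv l (gvec g y) = \sum_k l ord0 k * g k y.
Proof. by rewrite /dotv; apply: eq_bigr => k _; rewrite mxE. Qed.

Lemma gx_ineq j (xj xs : 'rV[R]_d) (lj : 'rV[R]_m) :
  inball Rad xj -> inball Rad xs -> (forall k, 0 <= lj ord0 k) ->
  f j xj - f j xs + dotv lj (gvec g xj) - dotv lj (gvec g xs)
  <= dotv (xj - xs) (gx j xj lj).
Proof.
move=> xin sin l0.
rewrite /gradx dotvDr dotv_sumr.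
have hf : f j xj - f j xs <= dotv (xj - xs) (df j xj).
  have := Hdf j xin sin; rewrite dotvC -opprB dotvNl; lra.
have hg : dotv lj (gvec g xj) - dotv lj (gvec g xs)
    <= \sum_k dotv (xj - xs) (lj ord0 k *: dg k xj).
  rewrite !dot_gvec -sumrB; apply: ler_sum => k _.
  rewrite dotvZr -mulrBr; apply: ler_wpM2l => //.
  have := Hdg k xin sin; rewrite dotvC -opprB dotvNl; lra.
lra.
Qed.

Lemma gl_ineq (xj : 'rV[R]_d) (lj lm : 'rV[R]_m) :
  dotv (lj - lm) (gl xj lj) <=
  dotv lj (gvec g xj) - dotv lm (gvec g xj) - eta / 2 * sq lj + eta / 2 * sq lm.
Proof.
rewrite /gradlam dotvBr !dotvBl !dotvZr.
have := sq_ge0 (lm - lj); rewrite sq_B => h.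
rewrite (dotvC lj (gvec g xj)) (dotvC lm (gvec g xj)) /sq in h *.
have e0 := eta0.
nra.
Qed.

Definition phi j (xj xs : 'rV[R]_d) (lj lm : 'rV[R]_m) :=
  f j xj - f j xs + dotv lm (gvec g xj) - dotv lj (gvec g xs)
  + eta / 2 * sq lj - eta / 2 * sq lm.

Definition qq j (xj : 'rV[R]_d) (lj : 'rV[R]_m) := sq (gx j xj lj) + sq (gl xj lj).

Lemma agent_step t j (xs : 'rV[R]_d) (lm : 'rV[R]_m) :
  inball Rad xs -> (forall k, 0 <= lm ord0 k) ->
  sq (x t j - a t *: gx j (x t j) (lam t j) - xs)
  + sq (lam t j + a t *: gl (x t j) (lam t j) - lm)
  <= sq (x t j - xs) + sq (lam t j - lm)
     - 2 * a t * phi j (x t j) xs (lam t j) lm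
     + a t ^+ 2 * qq j (x t j) (lam t j).
Proof.
move=> sin lm0.
have l0 : forall k, 0 <= lam t j ord0 k by move=> k; case/andP: (lam_bound t j k).
have h1 := gx_ineq j (x_inb t j) sin l0.
have h2 := gl_ineq (x t j) (lam t j) lm.
have -> : x t j - a t *: gx j (x t j) (lam t j) - xs
        = (x t j - xs) - a t *: gx j (x t j) (lam t j).
  by rewrite addrAC.
have -> : lam t j + a t *: gl (x t j) (lam t j) - lm
        = (lam t j - lm) + a t *: gl (x t j) (lam t j).
  by rewrite addrAC.
rewrite (sq_B (x t j - xs)) (sq_D (lam t j - lm)) !sq_Z dotvZr dotvZr /phi /qq.
have a0 := a_ge0 t.
set A := a t in a0 *.
set P := dotv (x t j - xs) _ in h1 *.
set Q := dotv (lam t j - lm) _ in h2 *.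
have hA1 : A * (f j (x t j) - f j xs + dotv (lam t j) (gvec g (x t j)) -
     dotv (lam t j) (gvec g xs)) <= A * P by apply: ler_wpM2l.
have hA2 : A * Q <= A * (dotv (lam t j) (gvec g (x t j)) - dotv lm (gvec g (x t j)) -
      eta / 2 * sq (lam t j) + eta / 2 * sq lm) by apply: ler_wpM2l.
nra.
Qed.

Lemma mix_sq k (y : 'I_n -> 'rV[R]_k) z i :
  sq (\sum_j W i j *: y j - z) <= \sum_j W i j * sq (y j - z).
Proof.
have -> : \sum_j W i j *: y j - z = \sum_j W i j *: (y j - z).
  under [X in _ = X]eq_bigr do rewrite scalerBr.
  by rewrite sumrB -scaler_suml HWr scale1r.
exact: jensen_sq.
Qed.

Lemma sum_col (c : 'I_n -> R) : \sum_i \sum_j W i j * c j = \sum_j c j.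
Proof.
rewrite exchange_big /=; apply: eq_bigr => j _.
by rewrite -mulr_suml HWc mul1r.
Qed.

Definition Dst t (xs : 'rV[R]_d) (lm : 'rV[R]_m) :=
  \sum_i (sq (x t i - xs) + sq (lam t i - lm)).
Definition Phi t xs lm := \sum_j phi j (x t j) xs (lam t j) lm.
Definition Qt t := \sum_j qq j (x t j) (lam t j).

Lemma D_step t (xs : 'rV[R]_d) (lm : 'rV[R]_m) : inball Rad xs -> (forall k, 0 <= lm ord0 k) ->
  Dst t.+1 xs lm <= Dst t xs lm - 2 * a t * Phi t xs lm + a t ^+ 2 * Qt t.
Proof.
move=> sin lm0.
apply: le_trans (_ : \sum_j (sq (x t j - a t *: gx j (x t j) (lam t j) - xs)
  + sq (lam t j + a t *: gl (x t j) (lam t j) - lm)) <= _).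
  rewrite /Dst.
  apply: le_trans (_ : \sum_i \sum_j W i j * (sq (x t j - a t *: gx j (x t j) (lam t j) - xs)
  + sq (lam t j + a t *: gl (x t j) (lam t j) - lm)) <= _); last by rewrite sum_col.
  apply: ler_sum => i _; rewrite stepE /=.
  under [X in _ <= X]eq_bigr do rewrite mulrDr.
  rewrite big_split /=; apply: lerD.
    apply: le_trans (proj_nonexp _ _ _) (mix_sq _ _ _) => //.
  apply: le_trans (pospart_nonexp _ _) (mix_sq _ _ _) => //.
apply: le_trans (_ : \sum_j (sq (x t j - xs) + sq (lam t j - lm)
     - 2 * a t * phi j (x t j) xs (lam t j) lm
     + a t ^+ 2 * qq j (x t j) (lam t j)) <= _).
  by apply: ler_sum => j _; apply: agent_step.
rewrite /Dst /Phi /Qt big_split sumrB /= mulr_sumr mulr_sumr.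
by rewrite big_split /=.
Qed.

Lemma D_sum T (xs : 'rV[R]_d) (lm : 'rV[R]_m) : inball Rad xs -> (forall k, 0 <= lm ord0 k) ->
  Dst T xs lm + 2 * \sum_(t < T) a t * Phi t xs lm
  <= Dst 0 xs lm + \sum_(t < T) a t ^+ 2 * Qt t.
Proof.
move=> sin lm0; elim: T => [|T IH].
  by rewrite !big_ord0 mulr0 !addr0.
rewrite !big_ord_recr /=.
have := D_step T sin lm0; lra.
Qed.

Lemma subgrad_avg (h : 'rV[R]_d -> R) (dh : 'rV[R]_d -> 'rV[R]_d) (I : finType)
  (w : I -> R) (p : I -> 'rV[R]_d) :
  (forall y, inball Rad y -> subgrad_on (inball Rad) h y (dh y)) ->
  (forall t, 0 <= w t) -> 0 < \sum_t w t -> (forall t, inball Rad (p t)) ->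
  (\sum_t w t) * h ((\sum_t w t)^-1 *: \sum_t w t *: p t) <= \sum_t w t * h (p t).
Proof.
move=> hs w0 S0 pin.
set S := \sum_t w t.
set c := S^-1 *: \sum_t w t *: p t.
have cin : inball Rad c.
  rewrite /inball /c scaler_sumr.
  under eq_bigr do rewrite scalerA.
  apply: ball_avg => //.
    by move=> t; rewrite mulr_ge0 // invr_ge0 ltW.
  by rewrite -mulr_sumr mulVf // gt_eqF.
have key : \sum_t w t *: (p t - c) = 0.
  under eq_bigr do rewrite scalerBr.
  rewrite sumrB -scaler_suml -/S /c scalerA mulfV ?gt_eqF // scale1r.
  by rewrite subrr.
apply: le_trans (_ : \sum_t w t * (h c + dotv (dh c) (p t - c)) <= _).
  rewrite (eq_bigr (fun t => w t * h c + dotv (dh c) (w t *: (p t - c)))); last first.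
    by move=> t _; rewrite dotvZr mulrDr.
  by rewrite big_split /= -mulr_suml -dotv_sumr key dotv0r addr0.
apply: ler_sum => t _; apply: ler_wpM2l => //; exact: hs.
Qed.

Lemma fh_subgrad j (lm : 'rV[R]_m) : (forall k, 0 <= lm ord0 k) ->
  forall y, inball Rad y -> subgrad_on (inball Rad)
    (fun z => f j z + dotv lm (gvec g z)) y (df j y + \sum_k lm ord0 k *: dg k y).
Proof.
move=> lm0 y yin z zin.
rewrite dotvDl dotv_suml !dot_gvec.
have h1 := Hdf j yin zin.
have h2 : \sum_k lm ord0 k * g k y + \sum_k dotv (lm ord0 k *: dg k y) (z - y)
   <= \sum_k lm ord0 k * g k z.
  rewrite -big_split; apply: ler_sum => k _ /=.
  rewrite dotvZl -mulrDr; apply: ler_wpM2l => //; exact: Hdg.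
lra.
Qed.

Definition Psi t (xs : 'rV[R]_d) :=
  \sum_j (eta / 2 * sq (lam t j) - dotv (lam t j) (gvec g xs)).

Definition Ssum T := \sum_(t < T) a t.

Local Notation xh T i := (xhat W Rad eta df g dg T i).

Lemma sum_const_ord k (c : R) : \sum_(j < k) c = k%:R * c.
Proof. by rewrite sumr_const card_ord mulr_natl. Qed.

Lemma sum_const_n (c : R) : \sum_(j < n) c = n%:R * c.
Proof. exact: sum_const_ord. Qed.

Lemma Phi_split t (xs : 'rV[R]_d) (lm : 'rV[R]_m) :
  Phi t xs lm = \sum_j (f j (x t j) + dotv lm (gvec g (x t j)))
     - (\sum_j f j xs + n%:R * (eta / 2 * sq lm)) + Psi t xs.
Proof.
rewrite /Phi /Psi /phi -sum_const_n -big_split /= -sumrB -big_split /=.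
by apply: eq_bigr => j _; ring.
Qed.

Lemma Phi_sum_lb T (xs : 'rV[R]_d) (lm : 'rV[R]_m) :
  0 < Ssum T -> (forall k, 0 <= lm ord0 k) ->
  Ssum T * \sum_j (f j (xh T j) + dotv lm (gvec g (xh T j)))
  - Ssum T * (\sum_j f j xs + n%:R * (eta / 2 * sq lm))
  + \sum_(t < T) a t * Psi t xs
  <= \sum_(t < T) a t * Phi t xs lm.
Proof.
move=> S0 lm0.
have -> : \sum_(t < T) a t * Phi t xs lm =
    \sum_(t < T) a t * \sum_j (f j (x t j) + dotv lm (gvec g (x t j)))
    - Ssum T * (\sum_j f j xs + n%:R * (eta / 2 * sq lm))
    + \sum_(t < T) a t * Psi t xs.
  under eq_bigr do rewrite Phi_split mulrDr mulrBr.
  by rewrite big_split sumrB /= /Ssum mulr_suml.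
rewrite lerD2r lerD2r.
rewrite mulr_sumr.
under [X in _ <= X]eq_bigr do rewrite mulr_sumr.
rewrite [X in _ <= X]exchange_big /=.
apply: ler_sum => j _.
have := subgrad_avg (fh_subgrad j lm0) (fun t : 'I_T => a_ge0 t) S0 (fun t => x_inb t j).
by rewrite /xhat.
Qed.

Definition Lam t j := \sum_k lam t j ord0 k.

Lemma lam_ge0 t j k : 0 <= lam t j ord0 k.
Proof. by case/andP: (lam_bound t j k). Qed.

Lemma Lam_ge0 t j : 0 <= Lam t j.
Proof. by apply: sumr_ge0 => k _; apply: lam_ge0. Qed.

Lemma Lam_le t j : Lam t j <= m%:R * (G / eta).
Proof.
rewrite /Lam -sum_const_ord; apply: ler_sum => k _.
by case/andP: (lam_bound t j k).
Qed.

Lemma gx_norm t j : enorm (gx j (x t j) (lam t j)) <= L * (1 + Lam t j).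
Proof.
rewrite /gradx; apply: le_trans (enormD _ _) _.
rewrite mulrDr mulr1; apply: lerD; first exact: HLf (x_inb t j).
apply: le_trans (enorm_sum _ _) _.
rewrite /Lam mulr_sumr; apply: ler_sum => k _.
rewrite enormZ ger0_norm ?lam_ge0 // mulrC; apply: ler_wpM2r; first exact: lam_ge0.
exact: HLg (x_inb t j).
Qed.

Lemma qq_bound t j : qq j (x t j) (lam t j)
   <= L ^+ 2 * (1 + Lam t j) ^+ 2 + m%:R * (4 * G ^+ 2).
Proof.
rewrite /qq; apply: lerD.
  rewrite -enorm_sq -exprMn !expr2.
  by apply: ler_pM; rewrite ?enorm_ge0 ?gx_norm.
rewrite /sq /dotv -sum_const_ord; apply: ler_sum => k _.
rewrite !mxE -expr2.
have gb := g_boundG k (x_inb t j); rewrite ler_norml in gb; case/andP: gb => g1 g2.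
have /andP [l1 l2] := lam_bound t j k.
have e1 : eta * lam t j ord0 k <= G.
  by rewrite mulrC -ler_pdivlMr.
have e2 : 0 <= eta * lam t j ord0 k by rewrite mulr_ge0 // ltW.
set u := g k (x t j) in g1 g2 *; set v := eta * lam t j ord0 k in e1 e2 *.
have G0 := G_ge0; nra.
Qed.

Lemma Q_bound2 t : Qt t <= n%:R * (2 * L ^+ 2 + m%:R * (4 * G ^+ 2))
    + 2 * L ^+ 2 * (m%:R * (G / eta)) * \sum_j Lam t j.
Proof.
rewrite /Qt mulr_sumr -sum_const_n -big_split /=; apply: ler_sum => j _.
apply: le_trans (qq_bound t j) _.
have h1 := Lam_le t j; have h0 := Lam_ge0 t j.
have : (1 + Lam t j) ^+ 2 <= 2 + 2 * (m%:R * (G / eta)) * Lam t j.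
  have : Lam t j * Lam t j <= m%:R * (G / eta) * Lam t j by apply: ler_wpM2r.
  have : 0 <= (1 - Lam t j) ^+ 2 by apply: sqr_ge0.
  nra.
move=> h; have L2 : 0 <= L ^+ 2 by apply: sqr_ge0.
have := ler_wpM2l L2 h; nra.
Qed.

Lemma Q_bound t : Qt t <= n%:R * (2 * L ^+ 2 + m%:R * (4 * G ^+ 2))
    + 2 * L ^+ 2 * (m%:R * (G / eta)) * (n%:R * (m%:R * (G / eta))).
Proof.
apply: le_trans (Q_bound2 t) _; rewrite lerD2l; apply: ler_wpM2l.
  apply: mulr_ge0; first by apply: mulr_ge0 => //; exact: sqr_ge0.
  by apply: mulr_ge0 => //; apply: divr_ge0; [exact: G_ge0 | exact: ltW].
rewrite -sum_const_n; apply: ler_sum => j _; exact: Lam_le.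
Qed.

Lemma Psi_ge0 t (xs : 'rV[R]_d) : feasible g xs -> 0 <= Psi t xs.
Proof.
move=> fs; apply: sumr_ge0 => j _.
rewrite dot_gvec subr_ge0; apply: le_trans (_ : 0 <= _).
  rewrite -oppr_ge0 -sumrN; apply: sumr_ge0 => k _.
  by rewrite -mulrN mulr_ge0 ?lam_ge0 // oppr_ge0.
by rewrite mulr_ge0 ?sq_ge0 // divr_ge0 // ltW.
Qed.

Lemma Psi_ge_delta t (xs : 'rV[R]_d) del : (forall k, g k xs <= - del) ->
  del * \sum_j Lam t j <= Psi t xs.
Proof.
move=> hd; rewrite mulr_sumr; apply: ler_sum => j _.
rewrite dot_gvec /Lam mulr_sumr.
have : 0 <= eta / 2 * sq (lam t j) by rewrite mulr_ge0 ?sq_ge0 // divr_ge0 // ltW.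
suff : \sum_k del * lam t j ord0 k <= - \sum_k lam t j ord0 k * g k xs by lra.
rewrite -sumrN; apply: ler_sum => k _.
rewrite -mulrN mulrC; apply: ler_wpM2l; first exact: lam_ge0.
by rewrite lerNr.
Qed.

Lemma D0E (xs : 'rV[R]_d) (lm : 'rV[R]_m) : Dst 0 xs lm = n%:R * (sq xs + sq lm).
Proof.
by rewrite /Dst -sum_const_n; apply: eq_bigr => i _ /=; rewrite !sub0r !sq_N.
Qed.

Lemma xh_in T j : 0 < Ssum T -> inball Rad (xh T j).
Proof.
move=> S0; rewrite /inball /xhat scaler_sumr.
under eq_bigr do rewrite scalerA.
apply: ball_avg => //.
- by move=> t; rewrite mulr_ge0 ?a_ge0 // invr_ge0 ltW.
- by rewrite -mulr_sumr mulVf // gt_eqF.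
- by move=> t; apply: x_in.
Qed.

Definition Vs T := \sum_j gvec g (xh T j).
Definition Pv T := pospart (n%:R^-1 *: Vs T).

Lemma dot_pos_V (V : 'rV[R]_m) : dotv (pospart V) V = sq (pospart V).
Proof.
rewrite /sq /dotv; apply: eq_bigr => k _; rewrite !mxE.
by case: (leP 0 (V ord0 k)) => h //; rewrite !mul0r.
Qed.

Lemma dot_P_Vs T : (0 < n)%N -> dotv (Pv T) (Vs T) = n%:R * sq (Pv T).
Proof.
move=> n0; rewrite /Pv.
set V := n%:R^-1 *: Vs T.
have eV : Vs T = n%:R *: V by rewrite /V scalerA mulfV ?scale1r // pnatr_eq0 -lt0n.
by rewrite eV dotvZr dot_pos_V.
Qed.

Lemma main_ineq T (xs : 'rV[R]_d) : (0 < n)%N -> 0 < Ssum T -> inball Rad xs ->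
  Ssum T * n%:R * sq (Pv T) / eta - n%:R * sq (Pv T) / eta ^+ 2
  + 2 * Ssum T * \sum_j (f j (xh T j) - f j xs)
  + 2 * \sum_(t < T) a t * Psi t xs
  <= n%:R * sq xs + \sum_(t < T) a t ^+ 2 * Qt t.
Proof.
move=> n0 S0 sin.
set lm := eta^-1 *: Pv T.
have lm0 : forall k, 0 <= lm ord0 k.
  by move=> k; rewrite mxE; apply: mulr_ge0; [rewrite invr_ge0 ltW | rewrite pospartE max0_ge0].
have h1 := D_sum T sin lm0.
have h2 := Phi_sum_lb xs S0 lm0.
have hD : 0 <= Dst T xs lm.
  by apply: sumr_ge0 => i _; rewrite addr_ge0 ?sq_ge0.
rewrite D0E in h1.
have e1 : \sum_j (f j (xh T j) + dotv lm (gvec g (xh T j)))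
   = \sum_j f j (xh T j) + eta^-1 * (n%:R * sq (Pv T)).
  by rewrite big_split /= -dotv_sumr -/(Vs T) /lm dotvZl dot_P_Vs.
have e2 : sq lm = eta^-1 ^+ 2 * sq (Pv T) by rewrite /lm sq_Z.
rewrite e1 e2 in h2; rewrite e2 in h1.
have e3 : \sum_j (f j (xh T j) - f j xs) = \sum_j f j (xh T j) - \sum_j f j xs.
  by rewrite sumrB.
rewrite e3.
set S := Ssum T in h2 *.
set p := sq (Pv T) in h1 h2 *.
set F1 := \sum_j f j (xh T j) in h2 *.
set F2 := \sum_j f j xs in h2 *.
set Ps := \sum_(t < T) a t * Psi t xs in h2 *.
set Qs := \sum_(t < T) a t ^+ 2 * Qt t in h1 *.
set Ph := \sum_(t < T) a t * Phi t xs lm in h1 h2.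
have e4 : S * (F2 + n%:R * (eta / 2 * (eta^-1 ^+ 2 * p))) = S * F2 + S * n%:R * p / eta / 2.
  by field; rewrite gt_eqF.
have e5 : S * (F1 + eta^-1 * (n%:R * p)) = S * F1 + S * n%:R * p / eta.
  by field; rewrite gt_eqF.
have e6 : n%:R * (sq xs + eta^-1 ^+ 2 * p) = n%:R * sq xs + n%:R * p / eta ^+ 2.
  by field; rewrite gt_eqF.
rewrite e4 e5 in h2; rewrite e6 in h1.
lra.
Qed.

Lemma sbp T i : enorm (\sum_(t < T) a t *: (x t i - x t.+1 i)) <= a 0 * Rad.
Proof.
have H : forall T, enorm (\sum_(t < T) a t *: (x t i - x t.+1 i) + a T *: x T i)
                  <= (a 0 - a T) * Rad.
  elim=> [|T' IH]; first by rewrite big_ord0 add0r /= scaler0 enorm0 subrr mul0r.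
  rewrite big_ord_recr /=.
  have -> : \sum_(i0 < T') a i0 *: (x i0 i - x i0.+1 i) + a T' *: (x T' i - x T'.+1 i)
      + a T'.+1 *: x T'.+1 i
    = (\sum_(i0 < T') a i0 *: (x i0 i - x i0.+1 i) + a T' *: x T' i)
      + (a T'.+1 - a T') *: x T'.+1 i.
    by rewrite scalerBr scalerBl !addrA [LHS]addrAC; reflexivity.
  apply: le_trans (enormD _ _) _.
  rewrite enormZ ler0_norm; last by rewrite subr_le0 a_le.
  have h1 := x_in T'.+1 i; have h2 := a_le (leqnSn T').
  have : (- (a T'.+1 - a T')) * enorm (x T'.+1 i) <= (a T' - a T'.+1) * Rad.
    by rewrite opprB; apply: ler_wpM2l; rewrite // subr_ge0.
  lra.
have h := H T.
have -> : \sum_(t < T) a t *: (x t i - x t.+1 i)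
   = (\sum_(t < T) a t *: (x t i - x t.+1 i) + a T *: x T i) - a T *: x T i.
  by rewrite addrK.
apply: le_trans (enormB _ _) _.
rewrite enormZ ger0_norm ?a_ge0 //.
have : a T * enorm (x T i) <= a T * Rad by apply: ler_wpM2l; rewrite ?a_ge0 ?x_in.
lra.
Qed.

Lemma r_bound t : \sum_k enorm (x t.+1 k - \sum_j W k j *: x t j)
   <= 2 * a t * \sum_j enorm (gx j (x t j) (lam t j)).
Proof.
rewrite mulr_sumr.
apply: le_trans (_ : \sum_k \sum_j W k j * (2 * a t * enorm (gx j (x t j) (lam t j))) <= _);
  last by rewrite sum_col.
apply: ler_sum => k _; rewrite stepE /=.
set mk := \sum_j W k j *: (x t j - a t *: gx j (x t j) (lam t j)).
set wk := \sum_j W k j *: x t j.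
have win : enorm wk <= Rad by apply: ball_avg => // j; apply: x_in.
have e : mk - wk = - (a t *: \sum_j W k j *: gx j (x t j) (lam t j)).
  rewrite /mk /wk -sumrB scaler_sumr -sumrN; apply: eq_bigr => j _.
  by rewrite scalerBr addrC addKr scalerA scalerA mulrC.
have -> : proj_ball Rad mk - wk = (proj_ball Rad mk - mk) + (mk - wk) by rewrite addrA subrK.
apply: le_trans (enormD _ _) _.
have h1 := proj_dist mk win.
have h2 : enorm (mk - wk) <= a t * \sum_j W k j * enorm (gx j (x t j) (lam t j)).
  rewrite e enormN enormZ ger0_norm ?a_ge0 //; apply: ler_wpM2l; first exact: a_ge0.
  apply: le_trans (enorm_sum _ _) _; apply: ler_sum => j _.
  by rewrite enormZ ger0_norm.
have -> : \sum_j W k j * (2 * a t * enorm (gx j (x t j) (lam t j)))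
   = 2 * (a t * \sum_j W k j * enorm (gx j (x t j) (lam t j))).
  rewrite mulr_sumr mulr_sumr; apply: eq_bigr => j _; ring.
lra.
Qed.

Definition uu T i := \sum_(t < T) a t *: x t i.

Lemma b_bound T : \sum_k enorm (uu T k - \sum_j W k j *: uu T j)
  <= n%:R * (a 0 * Rad) + 2 * \sum_(t < T) a t ^+ 2 * \sum_j (L * (1 + Lam t j)).
Proof.
have e : forall k, uu T k - \sum_j W k j *: uu T j
   = \sum_(t < T) a t *: (x t k - x t.+1 k)
     + \sum_(t < T) a t *: (x t.+1 k - \sum_j W k j *: x t j).
  move=> k; rewrite -big_split /= /uu.
  have -> : \sum_j W k j *: \sum_(t < T) a t *: x t j
      = \sum_(t < T) a t *: \sum_j W k j *: x t j.
    under eq_bigr do rewrite scaler_sumr.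
    rewrite exchange_big /=; apply: eq_bigr => t _; rewrite scaler_sumr.
    by apply: eq_bigr => j _; rewrite !scalerA mulrC.
  rewrite -sumrB; apply: eq_bigr => t _.
  by rewrite -scalerDr -scalerBr addrA subrK.
under eq_bigr do rewrite e.
apply: le_trans (_ : \sum_k (a 0 * Rad + \sum_(t < T) a t * enorm (x t.+1 k - \sum_j W k j *: x t j)) <= _).
  apply: ler_sum => k _; apply: le_trans (enormD _ _) _; apply: lerD; first exact: sbp.
  apply: le_trans (enorm_sum _ _) _; apply: ler_sum => t _.
  by rewrite enormZ ger0_norm ?a_ge0.
rewrite big_split /= sum_const_n lerD2l exchange_big /=.
rewrite mulr_sumr; apply: ler_sum => t _.
rewrite -mulr_sumr.
apply: le_trans (_ : a t * (2 * a t * \sum_j enorm (gx j (x t j) (lam t j))) <= _).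
  apply: ler_wpM2l; first exact: a_ge0.
  exact: r_bound.
have : \sum_j enorm (gx j (x t j) (lam t j)) <= \sum_j (L * (1 + Lam t j)).
  by apply: ler_sum => j _; apply: gx_norm.
have a0 := a_ge0 t.
set s1 := \sum_j enorm _; set s2 := \sum_j _.
move=> h; have := ler_wpM2l (mulr_ge0 a0 a0) h.
rewrite expr2; nra.
Qed.

Lemma xh_uu T i : xh T i = (Ssum T)^-1 *: uu T i.
Proof. by []. Qed.

Variable kap : R.
Hypothesis kap0 : 0 <= kap.
Hypothesis Hkap : forall u : 'I_n -> 'rV[R]_d,
  \sum_i enorm (u i - n%:R^-1 *: \sum_j u j)
  <= kap * \sum_k enorm (u k - \sum_j W k j *: u j).

Lemma disagree T : 0 < Ssum T ->
  \sum_i enorm (xh T i - n%:R^-1 *: \sum_j xh T j)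
  <= (Ssum T)^-1 * (kap * \sum_k enorm (uu T k - \sum_j W k j *: uu T j)).
Proof.
move=> S0.
have e : forall i, xh T i - n%:R^-1 *: \sum_j xh T j
    = (Ssum T)^-1 *: (uu T i - n%:R^-1 *: \sum_j uu T j).
  move=> i; rewrite !xh_uu -scaler_sumr scalerBr !scalerA mulrC.
  by [].
under eq_bigr do rewrite e enormZ ger0_norm ?invr_ge0 ?ltW //.
rewrite -mulr_sumr; apply: ler_wpM2l; first by rewrite invr_ge0 ltW.
exact: Hkap.
Qed.

Lemma z_in T : (0 < n)%N -> 0 < Ssum T -> inball Rad (n%:R^-1 *: \sum_j xh T j).
Proof.
move=> n0 S0; rewrite /inball scaler_sumr; apply: ball_avg.
- by move=> j; rewrite invr_ge0 ler0n.
- by rewrite sum_const_n mulfV // pnatr_eq0 -lt0n.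
- by move=> j; apply: xh_in.
Qed.

Lemma A_lb1 T (xs : 'rV[R]_d) : 0 < Ssum T -> inball Rad xs ->
  - (n%:R * (L * (2 * Rad))) <= \sum_j (f j (xh T j) - f j xs).
Proof.
move=> S0 sin; rewrite -sum_const_n -sumrN; apply: ler_sum => j _.
rewrite lerNl opprB.
have h := Hdf j sin (xh_in j S0).
have : `|dotv (df j xs) (xh T j - xs)| <= L * (2 * Rad).
  apply: dot_bound; first exact: HLf.
  apply: le_trans (enormB _ _) _; have := xh_in j S0; rewrite /inball.
  move: sin; rewrite /inball; lra.
rewrite ler_norml => /andP [h1 _]; lra.
Qed.

Lemma A_lb2 T (xs : 'rV[R]_d) : (0 < n)%N -> 0 < Ssum T ->
  favg f xs <= favg f (n%:R^-1 *: \sum_j xh T j) ->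
  - (L * \sum_i enorm (xh T i - n%:R^-1 *: \sum_j xh T j))
  <= \sum_j (f j (xh T j) - f j xs).
Proof.
move=> n0 S0 hopt.
set z := n%:R^-1 *: \sum_j xh T j.
have zin : inball Rad z by apply: z_in.
have h1 : \sum_j f j xs <= \sum_j f j z.
  move: hopt; rewrite /favg; apply: contraTT; rewrite -!ltNge => h.
  by rewrite ltr_pM2l // invr_gt0 ltr0n.
apply: le_trans (_ : \sum_j (f j z - f j xs - L * enorm (xh T j - z)) <= _).
  rewrite sumrB sumrB mulr_sumr; lra.
apply: ler_sum => j _.
have h := Hdf j zin (xh_in j S0).
have : `|dotv (df j z) (xh T j - z)| <= L * enorm (xh T j - z).
  by apply: dot_bound; [exact: HLf | exact: lexx].
rewrite ler_norml => /andP [h2 _]; lra.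
Qed.

Lemma opt_ball (xs z : 'rV[R]_d) : (0 < n)%N -> feasible g xs ->
  (forall y, feasible g y -> favg f xs <= favg f y) ->
  (forall k, g k xs < 0) -> inball Rad xs -> inball Rad z -> favg f xs <= favg f z.
Proof.
move=> n0 fs hopt hstr sin zin.
set del := (\sum_k (- g k xs)^-1 + 1)^-1.
have sp : 0 <= \sum_k (- g k xs)^-1.
  by apply: sumr_ge0 => k _; rewrite invr_ge0 oppr_ge0 ltW.
have del0 : 0 < del by rewrite invr_gt0; lra.
have hdel : forall k, g k xs <= - del.
  move=> k; rewrite lerNr -[- g k xs]invrK /del lef_pV2 ?posrE ?invr_gt0 ?oppr_gt0 //; last lra.
  rewrite (bigD1 k) //= -addrA lerDl addr_ge0 //.
  by apply: sumr_ge0 => j _; rewrite invr_ge0 oppr_ge0 ltW.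
have L0 : 0 <= L := le_trans (enorm_ge0 _) (HLf (Ordinal n0) zin).
set t := del / (2 * L * Rad + 1 + del).
have den0 : 0 < 2 * L * Rad + 1 + del.
  have : 0 <= 2 * L * Rad by rewrite !mulr_ge0.
  lra.
have t0 : 0 < t by rewrite /t divr_gt0.
have t1 : t <= 1.
  rewrite /t ler_pdivrMr // mul1r; have : 0 <= 2 * L * Rad by rewrite !mulr_ge0.
  lra.
have tL : t * (2 * L * Rad) <= del.
  have : t * (2 * L * Rad + 1 + del) = del by rewrite /t divfK // gt_eqF.
  have : 0 <= t * (1 + del) by rewrite mulr_ge0 ?ltW //; lra.
  nra.
set p := t *: z + (1 - t) *: xs.
have e1 : `|t| = t by rewrite ger0_norm ?ltW.
have pin : inball Rad p.
  rewrite /inball /p; apply: le_trans (enormD _ _) _.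
  have e2 : `|1 - t| = 1 - t by rewrite ger0_norm // subr_ge0.
  rewrite !enormZ e1 e2.
  move: sin zin; rewrite /inball => h1 h2.
  have : t * enorm z <= t * Rad by apply: ler_wpM2l; [exact: ltW | exact: h2].
  have : (1 - t) * enorm xs <= (1 - t) * Rad by apply: ler_wpM2l; [lra | exact: h1].
  lra.
have exs : xs - p = t *: (xs - z).
  by rewrite /p; apply/rowP => c; rewrite !mxE; ring.
have fp : feasible g p.
  move=> k; have h := Hdg k pin sin.
  have : `|dotv (dg k p) (xs - p)| <= L * (t * (2 * Rad)).
    apply: dot_bound; first exact: HLg.
    rewrite exs enormZ e1; apply: ler_wpM2l; first exact: ltW.
    apply: le_trans (enormB _ _) _; move: sin zin; rewrite /inball; lra.
  rewrite ler_norml => /andP [h1 h2].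
  have := hdel k.
  have : L * (t * (2 * Rad)) = t * (2 * L * Rad) by ring.
  lra.
have fconv : forall i, f i p <= t * f i z + (1 - t) * f i xs.
  move=> i; have h1 := Hdf i pin zin; have h2 := Hdf i pin sin.
  have e0 : t * dotv (df i p) (z - p) + (1 - t) * dotv (df i p) (xs - p) = 0.
    rewrite -!dotvZr -dotvDr.
    have -> : t *: (z - p) + (1 - t) *: (xs - p) = 0.
      by rewrite /p; apply/rowP => c; rewrite !mxE; ring.
    by rewrite dotv0r.
  have h3 : t * (f i p + dotv (df i p) (z - p)) <= t * f i z by apply: ler_wpM2l; [exact: ltW | exact: h1].
  have h4 : (1 - t) * (f i p + dotv (df i p) (xs - p)) <= (1 - t) * f i xs.
    by apply: ler_wpM2l; [lra | exact: h2].
  lra.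
have hfp : favg f p <= t * favg f z + (1 - t) * favg f xs.
  have hs : \sum_i f i p <= t * \sum_i f i z + (1 - t) * \sum_i f i xs.
    by rewrite !mulr_sumr -big_split; apply: ler_sum => i _; exact: fconv.
  have ni : 0 <= n%:R^-1 :> R by rewrite invr_ge0.
  have := ler_wpM2l ni hs; rewrite /favg.
  set A1 := \sum_i f i p; set A2 := \sum_i f i z; set A3 := \sum_i f i xs.
  have -> : t * (n%:R^-1 * A2) + (1 - t) * (n%:R^-1 * A3)
    = n%:R^-1 * (t * A2 + (1 - t) * A3) by ring.
  by [].
have := hopt p fp.
move=> h; have : t * favg f xs <= t * favg f z by lra.
by rewrite ler_pM2l.
Qed.



Definition Bm := m%:R * (G / eta).
Definition Qc := n%:R * (2 * L ^+ 2 + m%:R * (4 * G ^+ 2)) + 2 * L ^+ 2 * Bm * (n%:R * Bm).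

Lemma part1_bound T (xs : 'rV[R]_d) : (0 < n)%N -> 0 < Ssum T -> feasible g xs -> inball Rad xs ->
  n%:R * sq (Pv T) * (Ssum T / eta - 1 / eta ^+ 2)
  <= n%:R * Rad ^+ 2 + 4 * Ssum T * n%:R * L * Rad + Qc * \sum_(t < T) a t ^+ 2.
Proof.
move=> n0 S0 fs sin.
have h := main_ineq n0 S0 sin.
have hA := A_lb1 S0 sin.
have hP : 0 <= \sum_(t < T) a t * Psi t xs.
  by apply: sumr_ge0 => t _; rewrite mulr_ge0 ?a_ge0 ?Psi_ge0.
have hx : sq xs <= Rad ^+ 2 by rewrite -enorm_sq_le.
have hQ : \sum_(t < T) a t ^+ 2 * Qt t <= Qc * \sum_(t < T) a t ^+ 2.
  rewrite mulr_sumr; apply: ler_sum => t _; rewrite mulrC; apply: ler_wpM2r; first exact: sqr_ge0.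
  exact: Q_bound.
set S := Ssum T in h hA *.
set p := sq (Pv T) in h *.
set A := \sum_j _ in h hA.
set Ps := \sum_(t < T) a t * Psi t xs in h hP.
set Qs := \sum_(t < T) a t ^+ 2 * Qt t in h hQ.
have nR : 0 <= n%:R :> R by [].
have e : n%:R * p * (S / eta - 1 / eta ^+ 2) = S * n%:R * p / eta - n%:R * p / eta ^+ 2.
  by field; rewrite gt_eqF.
rewrite e.
have h2 : 2 * S * (- (n%:R * (L * (2 * Rad)))) <= 2 * S * A.
  by apply: ler_wpM2l => //; rewrite mulr_ge0 // ltW.
have h3 : n%:R * sq xs <= n%:R * Rad ^+ 2 by apply: ler_wpM2l.
nra.
Qed.

Definition c3 := n%:R * (2 * L ^+ 2 + m%:R * (4 * G ^+ 2)).
Definition c8 := 2 * L ^+ 2 * Bm + 4 * L ^+ 2 * kap.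

Lemma part2_bound T (xs : 'rV[R]_d) del : (0 < n)%N -> 0 < Ssum T -> inball Rad xs ->
  favg f xs <= favg f (n%:R^-1 *: \sum_j xh T j) ->
  (forall k, g k xs <= - del) ->
  n%:R * sq (Pv T) * (Ssum T / eta - 1 / eta ^+ 2)
  <= n%:R * Rad ^+ 2 + 2 * L * kap * n%:R * (a 0 * Rad)
     + (c3 + 4 * L ^+ 2 * kap * n%:R) * \sum_(t < T) a t ^+ 2
     + \sum_(t < T) a t * ((a t * c8 - 2 * del) * \sum_j Lam t j).
Proof.
move=> n0 S0 sin hopt hdel.
have h := main_ineq n0 S0 sin.
have hA := A_lb2 n0 S0 hopt.
have hD := disagree S0.
have hb := b_bound T.
have hP : del * \sum_(t < T) a t * \sum_j Lam t j <= \sum_(t < T) a t * Psi t xs.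
  rewrite mulr_sumr; apply: ler_sum => t _; rewrite mulrCA.
  by apply: ler_wpM2l; [exact: a_ge0 | exact: Psi_ge_delta].
have hx : sq xs <= Rad ^+ 2 by rewrite -enorm_sq_le.
have hQ : \sum_(t < T) a t ^+ 2 * Qt t
    <= c3 * \sum_(t < T) a t ^+ 2 + 2 * L ^+ 2 * Bm * \sum_(t < T) a t ^+ 2 * \sum_j Lam t j.
  rewrite !mulr_sumr -big_split /=; apply: ler_sum => t _.
  apply: le_trans (_ : a t ^+ 2 * (c3 + 2 * L ^+ 2 * Bm * \sum_j Lam t j) <= _).
    by apply: ler_wpM2l; [exact: sqr_ge0 | exact: Q_bound2].
  by apply: eqle; ring.
have eb : \sum_(t < T) a t ^+ 2 * \sum_j (L * (1 + Lam t j))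
   = n%:R * L * \sum_(t < T) a t ^+ 2 + L * \sum_(t < T) a t ^+ 2 * \sum_j Lam t j.
  rewrite !mulr_sumr -big_split; apply: eq_bigr => t _ /=.
  rewrite (eq_bigr (fun j => L + L * Lam t j)); last by move=> j _; ring.
  by rewrite big_split /= sum_const_n -mulr_sumr; ring.
rewrite eb in hb.
have ec : \sum_(t < T) a t * ((a t * c8 - 2 * del) * \sum_j Lam t j)
   = c8 * \sum_(t < T) a t ^+ 2 * \sum_j Lam t j - 2 * del * \sum_(t < T) a t * \sum_j Lam t j.
  rewrite !mulr_sumr -sumrB; apply: eq_bigr => t _; ring.
rewrite ec.
set S := Ssum T in h hA hD *.
set p := sq (Pv T) in h *.
set A := \sum_j (f j _ - f j xs) in h hA.
set Dd := \sum_i enorm _ in hA hD.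
set Bb := \sum_k enorm _ in hD hb.
set Ps := \sum_(t < T) a t * Psi t xs in h hP.
set Qs := \sum_(t < T) a t ^+ 2 * Qt t in h hQ.
set X1 := \sum_(t < T) a t ^+ 2 in hQ hb *.
set X2 := \sum_(t < T) a t ^+ 2 * \sum_j Lam t j in hQ hb *.
set Y := \sum_(t < T) a t * \sum_j Lam t j in hP *.
have L0 : 0 <= L := le_trans (enorm_ge0 _) (HLf (Ordinal n0) sin).
have e : n%:R * p * (S / eta - 1 / eta ^+ 2) = S * n%:R * p / eta - n%:R * p / eta ^+ 2.
  by field; rewrite gt_eqF.
rewrite e.
have hSD : S * Dd <= kap * Bb.
  have := ler_wpM2l (ltW S0) hD; rewrite mulrA mulfV ?gt_eqF // mul1r.
  by [].
have h2 : - (2 * L * (kap * Bb)) <= 2 * S * A.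
  have : 2 * S * (- (L * Dd)) <= 2 * S * A by apply: ler_wpM2l; rewrite // mulr_ge0 // ltW.
  have : 2 * L * (S * Dd) <= 2 * L * (kap * Bb) by apply: ler_wpM2l; rewrite // mulr_ge0.
  nra.
have h3 : 2 * L * (kap * Bb)
   <= 2 * L * kap * (n%:R * (a 0 * Rad)) + 4 * L ^+ 2 * kap * (n%:R * X1) + 4 * L ^+ 2 * kap * X2.
  have : 2 * L * kap * Bb <= 2 * L * kap * (n%:R * (a 0 * Rad) + 2 * (n%:R * L * X1 + L * X2)).
    by apply: ler_wpM2l; rewrite // !mulr_ge0.
  move=> hh; apply: le_trans (_ : 2 * L * kap * Bb <= _); first by apply: eqle; ring.
  apply: le_trans hh _; apply: eqle; ring.
have h4 : n%:R * sq xs <= n%:R * Rad ^+ 2 by apply: ler_wpM2l.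
rewrite /c8.
nra.
Qed.

Lemma sum_ind_le (K1 : R) (T t1 : nat) : 0 <= K1 ->
  \sum_(t < T) (if (t < t1)%N then K1 else 0) <= t1%:R * K1.
Proof.
move=> K0.
suff : \sum_(t < T) (if (t < t1)%N then K1 else 0) = (minn T t1)%:R * K1.
  move=> ->; apply: ler_wpM2r => //; rewrite ler_nat; exact: geq_minr.
elim: T => [|T IH]; first by rewrite big_ord0 min0n mul0r.
rewrite big_ord_recr /= IH.
case: ifP => hT.
  have -> : minn T.+1 t1 = (minn T t1).+1 by lia.
  by rewrite -natr1 mulrDl mul1r.
have -> : minn T.+1 t1 = minn T t1 by move/negbT: hT; lia.
by rewrite addr0.
Qed.

Lemma tail_bound T del (t1 : nat) : 0 <= del -> 0 <= kap -> a t1 * c8 <= 2 * del ->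
  \sum_(t < T) a t * ((a t * c8 - 2 * del) * \sum_j Lam t j)
  <= t1%:R * (a 0 * (a 0 * c8 * (n%:R * Bm))).
Proof.
move=> d0 k0 ht1.
have Bm0 : 0 <= Bm by rewrite /Bm mulr_ge0 // divr_ge0 ?G_ge0 // ltW.
have L2 : 0 <= L ^+ 2 by apply: sqr_ge0.
have c80 : 0 <= c8.
  by rewrite /c8; apply: addr_ge0; apply: mulr_ge0 => //; apply: mulr_ge0.
set M := a 0 * c8 * (n%:R * Bm).
have M0 : 0 <= M.
  by rewrite /M; apply: mulr_ge0; [apply: mulr_ge0 => //; exact: a_ge0 | apply: mulr_ge0].
apply: le_trans (_ : \sum_(t < T) (if (t < t1)%N then a 0 * M else 0) <= _); last first.
  by apply: sum_ind_le; rewrite mulr_ge0 // a_ge0.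
apply: ler_sum => t _.
have hL0 : 0 <= \sum_j Lam t j by apply: sumr_ge0 => j _; apply: Lam_ge0.
have hL1 : \sum_j Lam t j <= n%:R * Bm.
  by rewrite -sum_const_n; apply: ler_sum => j _; apply: Lam_le.
have at0 := a_ge0 t; have ata := a_le (leq0n t).
set X := (a t * c8 - 2 * del) * \sum_j Lam t j.
case: ifP => ht.
  have h2 : X <= M.
    case: (lerP 0 (a t * c8 - 2 * del)) => hs.
      rewrite /X /M; apply: ler_pM => //.
      have : a t * c8 <= a 0 * c8 by apply: ler_wpM2r.
      lra.
    apply: le_trans (_ : X <= 0) M0.
    by rewrite /X nmulr_rle0.
  have : a t * X <= a t * M by apply: ler_wpM2l.
  have : a t * M <= a 0 * M by apply: ler_wpM2r.
  lra.
have hX : X <= 0.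
  rewrite /X; apply: mulr_le0_ge0 => //.
  have : a t * c8 <= a t1 * c8 by apply: ler_wpM2r => //; apply: a_le; rewrite leqNgt ht.
  lra.
by rewrite mulr_ge0_le0.
Qed.

End Algo.

Section Cons.
Variables (R : realType) (n d : nat) (W : 'M[R]_n) (E : rel 'I_n).
Hypothesis n0 : (0 < n)%N.
Hypothesis HW0 : forall i j, 0 <= W i j.
Hypothesis HWr : forall i, \sum_j W i j = 1.
Hypothesis HWc : forall j, \sum_i W i j = 1.
Hypothesis HE : forall i j, E i j -> 0 < W i j.
Hypothesis Esym : forall i j, E i j = E j i.
Hypothesis Econn : forall i j, connect E i j.

Lemma fixed_const (v : 'rV[R]_n) : v *m W = v -> forall i j, v ord0 i = v ord0 j.
Proof.
move=> hv.
have hv' : forall j, \sum_i v ord0 i * W i j = v ord0 j.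
  by move=> j; rewrite -{2}hv mxE.
have S0 : \sum_i \sum_j W i j * (v ord0 i - v ord0 j) ^+ 2 = 0.
  have -> : \sum_i \sum_j W i j * (v ord0 i - v ord0 j) ^+ 2
     = \sum_i \sum_j (W i j * v ord0 i ^+ 2) + \sum_i \sum_j (W i j * v ord0 j ^+ 2)
       - 2 * \sum_i \sum_j (v ord0 i * W i j * v ord0 j).
    rewrite mulr_sumr -big_split -sumrB /=; apply: eq_bigr => i _.
    rewrite mulr_sumr -big_split -sumrB /=; apply: eq_bigr => j _; ring.
  have -> : \sum_i \sum_j (W i j * v ord0 i ^+ 2) = \sum_i v ord0 i ^+ 2.
    by apply: eq_bigr => i _; rewrite -mulr_suml HWr mul1r.
  have -> : \sum_i \sum_j (W i j * v ord0 j ^+ 2) = \sum_j v ord0 j ^+ 2.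
    by rewrite exchange_big /=; apply: eq_bigr => j _; rewrite -mulr_suml HWc mul1r.
  have -> : \sum_i \sum_j (v ord0 i * W i j * v ord0 j) = \sum_j v ord0 j ^+ 2.
    rewrite exchange_big /=; apply: eq_bigr => j _.
    by rewrite -mulr_suml hv' expr2.
  ring.
have nn : forall i j, 0 <= W i j * (v ord0 i - v ord0 j) ^+ 2.
  by move=> i j; rewrite mulr_ge0 ?sqr_ge0.
have edge : forall i j, E i j -> v ord0 i = v ord0 j.
  move=> i j eij.
  have h1 : \sum_j W i j * (v ord0 i - v ord0 j) ^+ 2 = 0.
    move/eqP: S0; rewrite psumr_eq0; last by move=> k _; apply: sumr_ge0.
    by move/allP => /(_ i (mem_index_enum i)) /implyP /(_ isT) /eqP.
  move/eqP: h1; rewrite psumr_eq0; last by move=> k _; apply: nn.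
  move/allP => /(_ j (mem_index_enum j)) /implyP /(_ isT).
  rewrite mulf_eq0 (gt_eqF (HE eij)) /= sqrf_eq0 subr_eq0 => /eqP //.
move=> i j; have /connectP [p pth ->] := Econn i j.
elim: p i pth => [|c p IH] i //= /andP [eic pth].
by rewrite (edge _ _ eic); apply: IH.
Qed.

Definition Jm : 'M[R]_n := const_mx (n%:R^-1).
Definition Mm : 'M[R]_n := 1%:M - W + Jm.

Lemma nR0 : (n%:R : R) != 0.
Proof. by rewrite pnatr_eq0 -lt0n. Qed.

Lemma M_inj (v : 'rV[R]_n) : v *m Mm = 0 -> v = 0.
Proof.
rewrite /Mm mulmxDr mulmxBr mulmx1 => hv.
set s := \sum_i v ord0 i.
have hj : forall j, v ord0 j - (v *m W) ord0 j + n%:R^-1 * s = 0.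
  move=> j; move/rowP: hv => /(_ j); rewrite !mxE => h.
  rewrite -[X in _ = X]h; congr (_ + _); rewrite /s mulr_sumr; apply: eq_bigr => i _.
  by rewrite mxE mulrC.
have sW : \sum_j (v *m W) ord0 j = s.
  under eq_bigr do rewrite mxE.
  rewrite exchange_big /=; apply: eq_bigr => i _.
  by rewrite -mulr_sumr HWr mulr1.
have s0 : s = 0.
  have : \sum_j (v ord0 j - (v *m W) ord0 j + n%:R^-1 * s) = 0.
    by rewrite big1 // => j _; apply: hj.
  rewrite big_split sumrB /= -/s sW.
  by rewrite subrr add0r sumr_const card_ord -[(_ * s) *+ n]mulr_natl mulrA mulfV ?nR0 // mul1r.
have fx : v *m W = v.
  apply/rowP => j; have := hj j; rewrite s0 mulr0 addr0 => /eqP.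
  by rewrite subr_eq0 => /eqP ->.
have cst := fixed_const fx.
apply/rowP => i; rewrite mxE.
have : s = n%:R * v ord0 i.
  rewrite /s (eq_bigr (fun _ => v ord0 i)); last by move=> j _; rewrite (cst j i).
  by rewrite sumr_const card_ord mulr_natl.
rewrite s0 => /eqP; rewrite eq_sym mulf_eq0 (negbTE nR0) /= => /eqP //.
Qed.

Lemma M_unit : Mm \in unitmx.
Proof.
rewrite -row_free_unit -kermx_eq0; apply/eqP/row_matrixP => i.
rewrite row0; apply: M_inj.
by apply/sub_kermxP; exact: row_sub.
Qed.

Lemma WJ : W *m Jm = Jm.
Proof.
apply/matrixP => i j; rewrite !mxE.
under eq_bigr do rewrite mxE.
by rewrite -mulr_suml HWr mul1r.
Qed.

Lemma JJ : Jm *m Jm = Jm.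
Proof.
apply/matrixP => i j; rewrite !mxE.
under eq_bigr do rewrite !mxE.
rewrite sumr_const card_ord -[(_ * _) *+ n]mulr_natl mulrA mulfV ?nR0 // mul1r.
by [].
Qed.

Definition Nm := invmx Mm.

Lemma N_id : Nm *m (1%:M - W) = 1%:M - Jm.
Proof.
have e : Mm *m (1%:M - Jm) = 1%:M - W.
  rewrite mulmxBr mulmx1 {2}/Mm mulmxDl mulmxBl mul1mx WJ JJ.
  by rewrite subrr add0r /Mm addrK.
by rewrite -e /Nm mulKmx // M_unit.
Qed.


Lemma row_mulU (A : 'M[R]_n) (u : 'I_n -> 'rV[R]_d) k :
  row k (A *m \matrix_(i, c) u i ord0 c) = \sum_j A k j *: u j.
Proof.
apply/rowP => c; rewrite !mxE summxE; apply: eq_bigr => j _.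
by rewrite !mxE.
Qed.

Lemma row_mulB (A : 'M[R]_n) (B : 'M[R]_(n, d)) i :
  row i (A *m B) = \sum_k A i k *: row k B.
Proof. by rewrite row_mul mulmx_sum_row; apply: eq_bigr => k _; rewrite mxE. Qed.

Lemma consensus : exists kap : R, 0 <= kap /\ forall u : 'I_n -> 'rV[R]_d,
  \sum_i enorm (u i - n%:R^-1 *: \sum_j u j)
  <= kap * \sum_k enorm (u k - \sum_j W k j *: u j).
Proof.
set K0 := \sum_i \sum_k `|Nm i k|.
have K00 : 0 <= K0 by apply: sumr_ge0 => i _; apply: sumr_ge0 => k _.
exists (n%:R * K0); split; first by rewrite mulr_ge0.
move=> u.
set U := \matrix_(i, c) u i ord0 c.
have eL : forall i, u i - n%:R^-1 *: \sum_j u j = row i ((1%:M - Jm) *m U).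
  move=> i; rewrite row_mulU.
  under [X in _ = X]eq_bigr do rewrite !mxE scalerBl.
  rewrite sumrB; congr (_ - _).
    rewrite (bigD1 i) //= eqxx scale1r big1 ?addr0 // => j ji.
    by rewrite eq_sym (negbTE ji) scale0r.
  by rewrite scaler_sumr.
have eR : forall k, u k - \sum_j W k j *: u j = row k ((1%:M - W) *m U).
  move=> k; rewrite row_mulU.
  under [X in _ = X]eq_bigr do rewrite !mxE scalerBl.
  rewrite sumrB; congr (_ - _).
  rewrite (bigD1 k) //= eqxx scale1r big1 ?addr0 // => j jk.
  by rewrite eq_sym (negbTE jk) scale0r.
have eN : (1%:M - Jm) *m U = Nm *m ((1%:M - W) *m U) by rewrite mulmxA N_id.
under eq_bigr do rewrite eL eN row_mulB.
under [X in _ <= _ * X]eq_bigr do rewrite eR.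
set e := fun k => enorm (row k ((1%:M - W) *m U)).
apply: le_trans (_ : \sum_(i < n) (K0 * \sum_k e k) <= _); last first.
  by rewrite sumr_const card_ord -[(_ * _) *+ n]mulr_natl mulrA.
apply: ler_sum => i _.
apply: le_trans (enorm_sum _ _) _.
rewrite mulr_sumr; apply: ler_sum => k _.
rewrite enormZ -/(e k) ler_wpM2r ?enorm_ge0 //.
rewrite /K0 (bigD1 i) //= (bigD1 k) //= -addrA lerDl.
rewrite addr_ge0 // sumr_ge0 // => j _; rewrite sumr_ge0 //.
Qed.

End Cons.

Section Asym.
Variable R : realType.

Lemma exists_nat_gt (x : R) : exists N : nat, x < N%:R.
Proof.
exists (Num.Def.archi_bound `|x|); apply: le_lt_trans (ler_norm x) _.
exact: archi_boundP.
Qed.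

Lemma sqrt_nat_ge1 (T : nat) : (0 < T)%N -> 1 <= Num.sqrt (T%:R : R).
Proof. by move=> T0; rewrite -[X in X <= _]sqrtr1 ler_sqrt // ler1n. Qed.

Lemma lnT_le (T : nat) : (0 < T)%N -> ln (T%:R : R) <= 4 * Num.sqrt (Num.sqrt T%:R).
Proof.
move=> T0.
set s := Num.sqrt (Num.sqrt (T%:R : R)).
have s0 : 0 < s by rewrite /s !sqrtr_gt0 ltr0n.
have e : s ^+ 4 = T%:R.
  by rewrite (_ : 4 = 2 * 2)%N // exprM sqr_sqrtr ?sqrtr_ge0 // sqr_sqrtr // ler0n.
rewrite -e lnXn // -mulr_natl.
have : ln (1 + (s - 1)) <= s - 1 by apply: le_ln1Dx; lra.
rewrite addrC subrK; lra.
Qed.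

Lemma growth (K : R) : 0 <= K -> exists T0 : nat, forall T : nat, (T0 <= T)%N ->
  K * (1 + ln (T%:R : R)) <= Num.sqrt T%:R.
Proof.
move=> K0; have [N hN] := exists_nat_gt (4 * K + 1).
exists (N ^ 4)%N => T hT.
have N0 : (0 < N)%N by rewrite -(ltr0n R); apply: le_lt_trans hN; lra.
have T0 : (0 < T)%N by apply: leq_trans hT; rewrite expn_gt0 N0.
set s := Num.sqrt (Num.sqrt (T%:R : R)).
have sN : N%:R <= s.
  have h1 : (N ^ 2)%:R <= Num.sqrt (T%:R : R).
    rewrite -[X in X <= _]ger0_norm ?ler0n // -sqrtr_sqr ler_sqrt ?ler0n //.
    by rewrite -natrX ler_nat -expnM.
  rewrite -[X in X <= _]ger0_norm ?ler0n // -sqrtr_sqr ler_sqrt ?sqrtr_ge0 //.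
  by rewrite -natrX.
have hs : Num.sqrt (T%:R : R) = s ^+ 2 by rewrite sqr_sqrtr // sqrtr_ge0.
rewrite hs.
have := lnT_le T0; rewrite -/s => hl.
have : K * ln (T%:R) <= K * (4 * s) by apply: ler_wpM2l.
have : (4 * K + 1) * s <= s * s by apply: ler_wpM2r; [rewrite /s sqrtr_ge0 | lra].
rewrite expr2; nra.
Qed.

Lemma ln_large (K : R) : exists T0 : nat, forall T : nat, (T0 <= T)%N -> K <= ln (T%:R : R).
Proof.
have [N hN] := exists_nat_gt (expR K).
exists N => T hT.
have hT' : expR K <= T%:R by apply: le_trans (ltW hN) _; rewrite ler_nat.
rewrite -(expRK K) ler_ln // ?posrE ?expR_gt0 //.
by apply: lt_le_trans hT'; exact: expR_gt0.
Qed.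

Lemma harm (T : nat) : (0 < T)%N -> \sum_(t < T) (t.+1%:R : R)^-1 <= 1 + ln (T%:R : R).
Proof.
case: T => [//|T] _; elim: T => [|T IH].
  by rewrite big_ord1 ln1 invr1 addr0.
rewrite big_ord_recr /=.
set s1 := \sum_(i < T.+1) _.
have es : s1 = \sum_(i < T.+1) (i.+1%:R : R)^-1 by [].
rewrite es.
set s2 := \sum_(i < T.+1) _ in IH *.
suff : ((T.+2)%:R : R)^-1 <= ln (T.+2%:R : R) - ln (T.+1%:R) by move: IH; set A := ln _; set B := ln _; set C := _^-1; lra.
have hx : -1 < - ((T.+2)%:R : R)^-1.
  rewrite ltrN2 invf_lt1 ?ltr0n // ltr1n //.
have := le_ln1Dx hx.
have -> : 1 - ((T.+2)%:R : R)^-1 = T.+1%:R / T.+2%:R.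
  have e2 : (T.+2%:R : R) = T.+1%:R + 1 by rewrite natr1.
  have n2 : (T.+1%:R + 1 : R) != 0 by rewrite natr1 pnatr_eq0.
  by rewrite e2; field.
rewrite lnM ?posrE ?invr_gt0 ?ltr0n // lnV ?posrE ?ltr0n //; set A := ln (T.+1%:R : R); set B := ln (T.+2%:R : R); set C := (T.+2%:R : R)^-1; lra.
Qed.

Lemma Ssum_ge (Rad : R) (T : nat) : 0 <= Rad -> (0 < T)%N ->
  Rad * Num.sqrt T%:R <= \sum_(t < T) alpha Rad t.
Proof.
move=> R0 T0.
have sT : 0 < Num.sqrt (T%:R : R) by rewrite sqrtr_gt0 ltr0n.
apply: le_trans (_ : \sum_(t < T) Rad / Num.sqrt T%:R <= _).
  rewrite sumr_const card_ord -[(_ / _) *+ T]mulr_natl.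
  have hT : Num.sqrt (T%:R : R) ^+ 2 = T%:R by rewrite sqr_sqrtr // ler0n.
  rewrite -[X in _ <= X * _]hT.
  set q := Num.sqrt (T%:R : R) in sT *.
  have -> : q ^+ 2 * (Rad / q) = Rad * q by field; rewrite gt_eqF.
  by [].
apply: ler_sum => t _; rewrite /alpha; apply: ler_wpM2l => //.
rewrite lef_pV2 ?posrE ?sqrtr_gt0 ?ltr0n // ler_sqrt ?ler0n // ler_nat.
exact: ltn_ord.
Qed.

Lemma suma2 (Rad : R) (T : nat) : (0 < T)%N ->
  \sum_(t < T) alpha Rad t ^+ 2 <= Rad ^+ 2 * (1 + ln (T%:R : R)).
Proof.
move=> T0; apply: le_trans (_ : \sum_(t < T) Rad ^+ 2 * (t.+1%:R)^-1 <= _).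
  apply: ler_sum => t _; rewrite /alpha exprMn exprVn sqr_sqrtr ?ler0n //.
rewrite -mulr_sumr; apply: ler_wpM2l; first exact: sqr_ge0.
exact: harm.
Qed.

Lemma exists_delta (m : nat) (gk : 'I_m -> R) : (forall k, gk k < 0) ->
  exists2 del : R, 0 < del & forall k, gk k <= - del.
Proof.
move=> hstr.
set del := (\sum_k (- gk k)^-1 + 1)^-1.
have sp : 0 <= \sum_k (- gk k)^-1.
  by apply: sumr_ge0 => k _; rewrite invr_ge0 oppr_ge0 ltW.
exists del; first by rewrite invr_gt0; lra.
move=> k; rewrite lerNr -[- gk k]invrK /del lef_pV2 ?posrE ?invr_gt0 ?oppr_gt0 //; last lra.
rewrite (bigD1 k) //= -addrA lerDl addr_ge0 //.
by apply: sumr_ge0 => j _; rewrite invr_ge0 oppr_ge0 ltW.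
Qed.

End Asym.

Section Final.
Variables (R : realType) (n m d : nat)
  (f : 'I_n -> 'rV[R]_d -> R) (df : 'I_n -> 'rV[R]_d -> 'rV[R]_d)
  (g : 'I_m -> 'rV[R]_d -> R) (dg : 'I_m -> 'rV[R]_d -> 'rV[R]_d)
  (L Rad : R) (W : 'M[R]_n).
Hypothesis RadP : 0 < Rad.
Hypothesis HW0 : forall i j, 0 <= W i j.
Hypothesis HWr : forall i, \sum_j W i j = 1.
Hypothesis HWc : forall j, \sum_i W i j = 1.
Hypothesis Hdf : forall i x, inball Rad x -> subgrad_on (inball Rad) (f i) x (df i x).
Hypothesis Hdg : forall k x, inball Rad x -> subgrad_on (inball Rad) (g k) x (dg k x).
Hypothesis HLf : forall i x, inball Rad x -> enorm (df i x) <= L.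
Hypothesis HLg : forall k x, inball Rad x -> enorm (dg k x) <= L.
Hypothesis n0 : (0 < n)%N.

Lemma violE eta T : violation W Rad eta df g dg T = sq (Pv W Rad eta df g dg T).
Proof. by rewrite /violation enorm_sq. Qed.

Lemma S_facts T : (0 < T)%N ->
  Rad * Num.sqrt T%:R <= Ssum Rad T /\
  \sum_(t < T) alpha Rad t ^+ 2 <= Rad ^+ 2 * (1 + ln (T%:R : R)).
Proof.
move=> T0; split; first by rewrite /Ssum; apply: Ssum_ge => //; exact: ltW.
exact: suma2.
Qed.

Lemma final_step (p S eta M : R) : 0 <= p -> 0 < S -> 0 < eta -> 2 / eta <= S ->
  p * (S / eta - 1 / eta ^+ 2) <= M -> p <= 2 * eta * M / S.
Proof.
move=> p0 S0 e0 hS h.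
have h1 : S / (2 * eta) <= S / eta - 1 / eta ^+ 2.
  have e : S / eta - 1 / eta ^+ 2 - S / (2 * eta) = (S - 2 / eta) / (2 * eta).
    by field; rewrite gt_eqF.
  rewrite -subr_ge0 e; apply: divr_ge0; first by rewrite subr_ge0.
  by apply: mulr_ge0 => //; apply: ltW.
have h2 : p * (S / (2 * eta)) <= M by apply: le_trans h; apply: ler_wpM2l.
have z0 : 0 <= 2 * eta / S.
  by apply: divr_ge0; [apply: mulr_ge0 => //; apply: ltW | apply: ltW].
have h3 := ler_wpM2r z0 h2.
have e4 : p * (S / (2 * eta)) * (2 * eta / S) = p by field; rewrite !gt_eqF.
have e5 : M * (2 * eta / S) = 2 * eta * M / S by field; rewrite gt_eqF.
by rewrite e4 e5 in h3.
Qed.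


Lemma split_K (K1 K2 K3 l s : R) : 0 <= K1 -> 0 <= K2 -> 0 <= K3 -> 0 <= l ->
  (K1 + K2 + K3) * (1 + l) <= s ->
  [/\ K1 * (1 + l) <= s, K2 <= s & K3 <= s].
Proof.
move=> h1 h2 h3 hl h.
have : 0 <= K2 * l by rewrite mulr_ge0.
have : 0 <= K3 * l by rewrite mulr_ge0.
have : 0 <= K1 * (1 + l) by rewrite mulr_ge0 // addr_ge0.
move=> *; split; nra.
Qed.

Lemma part1_final (x0 : 'rV[R]_d) : feasible g x0 -> inball Rad x0 ->
  exists C : R, forall eta : R, 0 < eta ->
     (forall t : nat, eta * alpha Rad t <= 1 / 2) ->
     exists T0 : nat, forall T : nat, (T0 <= T)%N ->
       violation W Rad eta df g dg T <= C * eta.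
Proof.
move=> fx0 x0in.
have Rad0 := ltW RadP.
have L0 : 0 <= L := le_trans (enorm_ge0 _) (HLf (Ordinal n0) x0in).
exists (2 * (4 * L * Rad + 2)) => eta eta0 Hea.
set Q := Qc n Rad eta L g.
have nP : 0 < n%:R :> R by rewrite ltr0n.
have K10 : 0 <= `|Q| / n%:R * Rad by rewrite mulr_ge0 // divr_ge0 // ltW.
have K20 : 0 <= 2 / (eta * Rad) by rewrite divr_ge0 // mulr_ge0 // ltW.
have K0 : 0 <= `|Q| / n%:R * Rad + 2 / (eta * Rad) + Rad by rewrite !addr_ge0.
have [T1 hT1] := growth K0.
exists (maxn T1 1) => T hT.
have T0 : (0 < T)%N by move: hT; rewrite geq_max => /andP [].
have hg := hT1 T (leq_trans (leq_maxl _ _) hT).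
have lnT0 : 0 <= ln (T%:R : R) by apply: ln_ge0; rewrite ler1n.
have [hK1 hK2 hK3] := split_K K10 K20 Rad0 lnT0 hg.
have [hS hA] := S_facts T0.
set S := Ssum Rad T in hS *.
set A2 := \sum_(t < T) alpha Rad t ^+ 2 in hA *.
set sT := Num.sqrt (T%:R : R) in hg hK1 hK2 hK3 hS.
have sT0 : 0 < sT by rewrite /sT sqrtr_gt0 ltr0n.
have hS0 : 0 < S by apply: lt_le_trans hS; rewrite mulr_gt0.
have i1 : 2 / eta <= S.
  apply: le_trans hS.
  have -> : 2 / eta = Rad * (2 / (eta * Rad)) by field; rewrite !gt_eqF.
  by apply: ler_wpM2l.
have i2 : Rad ^+ 2 <= S by apply: le_trans hS; rewrite expr2; apply: ler_wpM2l.
have A20 : 0 <= A2 by apply: sumr_ge0 => t _; apply: sqr_ge0.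
have i3 : Q * A2 <= n%:R * S.
  apply: le_trans (_ : `|Q| * A2 <= _); first by apply: ler_wpM2r => //; apply: ler_norm.
  apply: le_trans (_ : `|Q| * (Rad ^+ 2 * (1 + ln (T%:R : R))) <= _).
    by apply: ler_wpM2l.
  have -> : `|Q| * (Rad ^+ 2 * (1 + ln (T%:R : R)))
      = n%:R * Rad * (`|Q| / n%:R * Rad * (1 + ln (T%:R : R))).
    by field; rewrite gt_eqF.
  apply: le_trans (_ : n%:R * Rad * sT <= _).
    by apply: ler_wpM2l => //; rewrite mulr_ge0 // ltW.
  by rewrite -mulrA; apply: ler_wpM2l => //; apply: ltW.
have hP := part1_bound Rad0 eta0 Hea HW0 HWr HWc Hdf Hdg HLf HLg n0 hS0 fx0 x0in.
rewrite -/S -/A2 -/Q in hP.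
have hP2 : sq (Pv W Rad eta df g dg T) * (S / eta - 1 / eta ^+ 2) <= S * (2 + 4 * L * Rad).
  rewrite -(ler_pM2l nP) mulrA; apply: le_trans hP _.
  have : 4 * S * n%:R * L * Rad = n%:R * (4 * S * L * Rad) by ring.
  move=> ->; have : n%:R * Rad ^+ 2 <= n%:R * S by apply: ler_wpM2l => //; apply: ltW.
  move: i3; nra.
have := final_step (sq_ge0 _) hS0 eta0 i1 hP2.
rewrite violE => h; apply: le_trans h _.
by apply: eqle; field; rewrite gt_eqF.
Qed.

Lemma part2_final (E : rel 'I_n) :
  (forall i j, E i j -> 0 < W i j) -> (forall i j, E i j = E j i) ->
  (forall i j, connect E i j) ->
  forall xs, feasible g xs -> (forall x, feasible g x -> favg f xs <= favg f x) ->
     (forall k, g k xs < 0) -> inball Rad xs ->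
     exists C : R, forall eta : R, 0 < eta ->
       (forall t : nat, eta * alpha Rad t <= 1 / 2) ->
       exists T0 : nat, forall T : nat, (T0 <= T)%N ->
         violation W Rad eta df g dg T <= C * (eta * ln (T%:R) / Num.sqrt (T%:R)).
Proof.
move=> HE Esym Econn xs fs hopt hstr xsin.
have Rad0 := ltW RadP.
have L0 : 0 <= L := le_trans (enorm_ge0 _) (HLf (Ordinal n0) xsin).
have [del del0 hdel] := exists_delta hstr.
have [kap [kap0 Hkap]] := consensus d n0 HW0 HWr HWc HE Econn.
have nP : 0 < n%:R :> R by rewrite ltr0n.
set c6 := `|c3 n Rad L g| / n%:R + 4 * L ^+ 2 * kap.
have c60 : 0 <= c6.
  by rewrite /c6; apply: addr_ge0; [apply: divr_ge0 => //; apply: ltW | rewrite !mulr_ge0 // sqr_ge0].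
set c9 := 3 * c6 * Rad ^+ 2 + 1.
have c90 : 0 < c9.
  have : 0 <= c6 * Rad ^+ 2 by apply: mulr_ge0 => //; apply: sqr_ge0.
  rewrite /c9; lra.
exists (2 * c9 / Rad) => eta eta0 Hea.
set c8e := c8 Rad eta L g kap.
have [N hN] := exists_nat_gt (Rad * `|c8e| / (2 * del)).
have Npos : 0 < N%:R :> R.
  apply: le_lt_trans hN; apply: divr_ge0; first by apply: mulr_ge0.
  by apply: mulr_ge0 => //; apply: ltW.
have N0 : (0 < N)%N by rewrite -(ltr0n R).
set t1 := (N ^ 2)%N.
have ht1 : alpha Rad t1 * c8e <= 2 * del.
  apply: le_trans (_ : alpha Rad t1 * `|c8e| <= _).
    by apply: ler_wpM2l; [rewrite /alpha divr_ge0 // sqrtr_ge0 | apply: ler_norm].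
  have a1 : alpha Rad t1 <= Rad / N%:R.
    rewrite /alpha; apply: ler_wpM2l => //.
    rewrite lef_pV2 ?posrE ?sqrtr_gt0 ?ltr0n ?N0 //.
    have hN2 : (N%:R : R) = Num.sqrt ((N ^ 2)%:R) by rewrite natrX sqrtr_sqr ger0_norm ?ler0n.
    by rewrite {1}hN2 ler_sqrt ?ler0n // ler_nat /t1 ltnW.
  have h5 : alpha Rad t1 * `|c8e| <= Rad / N%:R * `|c8e|.
    by apply: ler_wpM2r; [apply: normr_ge0 | exact: a1].
  apply: le_trans h5 _.
  move: hN; rewrite ltr_pdivrMr ?mulr_gt0 // => hN.
  have -> : Rad / N%:R * `|c8e| = Rad * `|c8e| / N%:R by rewrite mulrAC.
  rewrite ler_pdivrMr //; lra.
set K2 := t1%:R * (alpha Rad 0 * (alpha Rad 0 * c8e * (n%:R * Bm Rad eta L g))).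
set A0 := `|Rad ^+ 2 + 2 * L * kap * (alpha Rad 0 * Rad) + K2 / n%:R|.
have K0 : 0 <= 2 / (eta * Rad) by apply: divr_ge0 => //; apply: mulr_ge0; apply: ltW.
have [T1 hT1] := growth K0.
have [T2 hT2] := ln_large (A0 / (c6 * Rad ^+ 2 + 1) + 1).
exists (maxn (maxn T1 T2) 1) => T hT.
have T0 : (0 < T)%N by move: hT; rewrite !geq_max => /andP [] _.
have hg := hT1 T (leq_trans (leq_maxl _ _) (leq_trans (leq_maxl _ _) hT)).
have hl := hT2 T (leq_trans (leq_maxr _ _) (leq_trans (leq_maxl _ _) hT)).
have cR0 : 0 < c6 * Rad ^+ 2 + 1.
  have : 0 <= c6 * Rad ^+ 2 by apply: mulr_ge0 => //; apply: sqr_ge0.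
  lra.
have A00 : 0 <= A0 / (c6 * Rad ^+ 2 + 1) by apply: divr_ge0; [apply: normr_ge0 | apply: ltW].
have lnT1 : 1 <= ln (T%:R : R) by lra.
have [hS hA] := S_facts T0.
set S := Ssum Rad T in hS *.
set A2 := \sum_(t < T) alpha Rad t ^+ 2 in hA *.
set sT := Num.sqrt (T%:R : R) in hg hS *.
set lT := ln (T%:R : R) in hg hl hA lnT1 *.
have sT0 : 0 < sT by rewrite /sT sqrtr_gt0 ltr0n.
have hS0 : 0 < S by apply: lt_le_trans hS; rewrite mulr_gt0.
have hK2 : 2 / (eta * Rad) <= sT.
  apply: le_trans hg; rewrite -[X in X <= _]mulr1; apply: ler_wpM2l => //; lra.
have i1 : 2 / eta <= S.
  apply: le_trans hS.
  have -> : 2 / eta = Rad * (2 / (eta * Rad)) by field; rewrite !gt_eqF.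
  by apply: ler_wpM2l.
have A20 : 0 <= A2 by apply: sumr_ge0 => t _; apply: sqr_ge0.
have hz := @z_in R n m d W Rad eta df g dg Rad0 T n0 hS0.
have hoptz := opt_ball Rad0 Hdf Hdg HLf HLg n0 fs hopt hstr xsin hz.
have hP := part2_bound Rad0 eta0 Hea HW0 HWr HWc Hdf Hdg HLf HLg kap0 Hkap n0 hS0 xsin hoptz hdel.
have hTB := @tail_bound R n m d W Rad eta L df g dg Rad0 eta0 Hea HW0 HWr Hdg HLg kap kap0 T del t1 (ltW del0) kap0 ht1.
rewrite -/S -/A2 -/c8e in hP hTB.
rewrite -/K2 in hTB.
set TS := \sum_(t < T) _ in hP hTB.
set p := sq (Pv W Rad eta df g dg T) in hP *.
set X := S / eta - 1 / eta ^+ 2 in hP *.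
have hPX : p * X <= c9 * lT.
  rewrite -(ler_pM2l nP) mulrA; apply: le_trans hP _.
  have e1 : (c3 n Rad L g + 4 * L ^+ 2 * kap * n%:R) * A2 <= n%:R * (c6 * A2).
    apply: le_trans (_ : `|c3 n Rad L g| * A2 + 4 * L ^+ 2 * kap * n%:R * A2 <= _).
      by rewrite mulrDl; apply: lerD => //; apply: ler_wpM2r => //; apply: ler_norm.
    by apply: eqle; rewrite /c6; field; rewrite gt_eqF.
  have e2 : n%:R * Rad ^+ 2 + 2 * L * kap * n%:R * (alpha Rad 0 * Rad) + K2 <= n%:R * A0.
    apply: le_trans (_ : n%:R * (Rad ^+ 2 + 2 * L * kap * (alpha Rad 0 * Rad) + K2 / n%:R) <= _).
      by apply: eqle; field; rewrite gt_eqF.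
    by apply: ler_wpM2l; [apply: ltW | apply: ler_norm].
  have e3 : A0 <= (c6 * Rad ^+ 2 + 1) * (lT - 1).
    rewrite mulrC -ler_pdivrMr //; lra.
  have e4 : c6 * A2 <= c6 * (Rad ^+ 2 * (1 + lT)) by apply: ler_wpM2l.
  have e5 : A0 + c6 * A2 <= c9 * lT.
    have : 0 <= c6 * Rad ^+ 2 by apply: mulr_ge0 => //; apply: sqr_ge0.
    rewrite /c9; nra.
  have e6 : n%:R * (A0 + c6 * A2) <= n%:R * (c9 * lT) by apply: ler_wpM2l => //; apply: ltW.
  move: e1 e2 e6; set q1 := (c3 _ _ _ _ + _) * A2; nra.
have := final_step (sq_ge0 _) hS0 eta0 i1 hPX.
rewrite violE -/p => h; apply: le_trans h _.
have lT0 : 0 <= lT by lra.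
have num0 : 0 <= 2 * eta * (c9 * lT) by rewrite !mulr_ge0 // ltW.
apply: le_trans (_ : 2 * eta * (c9 * lT) / (Rad * sT) <= _).
  apply: ler_wpM2l => //; rewrite lef_pV2 ?posrE ?mulr_gt0 //.
by apply: eqle; field; rewrite !gt_eqF.
Qed.

End Final.

Theorem theorem3 (R : realType) (n m d : nat)
  (f : 'I_n -> 'rV[R]_d -> R) (df : 'I_n -> 'rV[R]_d -> 'rV[R]_d)
  (g : 'I_m -> 'rV[R]_d -> R) (dg : 'I_m -> 'rV[R]_d -> 'rV[R]_d)
  (L Rad : R) (E : rel 'I_n) (W : 'M[R]_n) :
  (exists x, feasible g x) ->
  convex_setP (feasible g) ->
  compact ([set x | feasible g x] : set 'rV[R]_d) ->
  (forall x, feasible g x -> inball Rad x) ->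
  (forall r, (forall x, feasible g x -> inball r x) -> Rad <= r) ->
  (exists xt, forall k, g k xt < 0) ->
  (forall i, convex_on (inball Rad) (f i)) ->
  (forall k, convex_on (inball Rad) (g k)) ->
  (forall i x, inball Rad x -> subgrad_on (inball Rad) (f i) x (df i x)) ->
  (forall k x, inball Rad x -> subgrad_on (inball Rad) (g k) x (dg k x)) ->
  (forall i x, inball Rad x -> enorm (df i x) <= L) ->
  (forall k x, inball Rad x -> enorm (dg k x) <= L) ->
  (0 < n)%N ->
  (forall i j, E i j = E j i) ->
  (forall i j, connect E i j) ->
  (forall i j, 0 <= W i j) ->
  (forall i, \sum_(j < n) W i j = 1) ->
  (forall j, \sum_(i < n) W i j = 1) ->
  (forall i j, E i j -> 0 < W i j) ->
  (forall i j, ~~ E i j -> W i j = 0) ->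
  (exists C : R, forall eta : R, 0 < eta ->
     (forall t : nat, eta * alpha Rad t <= 1 / 2) ->
     exists T0 : nat, forall T : nat, (T0 <= T)%N ->
       violation W Rad eta df g dg T <= C * eta)
  /\
  (forall xs, feasible g xs -> (forall x, feasible g x -> favg f xs <= favg f x) ->
     (forall k, g k xs < 0) ->
     exists C : R, forall eta : R, 0 < eta ->
       (forall t : nat, eta * alpha Rad t <= 1 / 2) ->
       exists T0 : nat, forall T : nat, (T0 <= T)%N ->
         violation W Rad eta df g dg T <= C * (eta * ln (T%:R) / Num.sqrt (T%:R))).
Proof.
move=> [x0 fx0] Hconv Hcomp Hin Hmin Hsl Hcf Hcg Hdf Hdg HLf HLg n0 Esym Econn
  HW0 HWr HWc HE HnE.
have Rad0 : 0 <= Rad := le_trans (enorm_ge0 _) (Hin x0 fx0).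
case: (eqVneq Rad 0) => [R0 | Rn0].
  have x00 : x0 = 0.
    have := Hin x0 fx0; rewrite /inball R0 enorm_sq_le // expr0n /= => h.
    by apply: sq_eq0; apply/eqP; rewrite eq_le h sq_ge0.
  have g0 : forall k, g k 0 <= 0 by move=> k; rewrite -x00; apply: fx0.
  have hv0 : forall eta T, violation W Rad eta df g dg T = 0.
    move=> eta T; rewrite /violation.
    have xh0 : forall i, xhat W Rad eta df g dg T i = 0.
      move=> i; rewrite /xhat.
      have -> : \sum_(t < T) alpha Rad t = 0.
        by apply: big1 => t _; rewrite /alpha R0 mul0r.
      by rewrite invr0 scale0r.
    under eq_bigr do rewrite xh0.
    have -> : pospart (n%:R^-1 *: \sum_(i < n) gvec g 0) = 0.
      apply/rowP => k; rewrite !mxE; apply/eqP; rewrite eq_le max0_ge0 andbT.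
      apply: max0_le => //.
      rewrite summxE; apply: mulr_ge0_le0; first by rewrite invr_ge0.
      by rewrite -oppr_ge0 -sumrN; apply: sumr_ge0 => i _; rewrite mxE oppr_ge0.
    by rewrite enorm0 expr0n.
  split.
    by exists 0 => eta _ _; exists 0%N => T _; rewrite hv0 mul0r.
  by move=> xs _ _ _; exists 0 => eta _ _; exists 0%N => T _; rewrite hv0 mul0r.
have RadP : 0 < Rad by rewrite lt_def Rn0 Rad0.
split.
  exact: (part1_final RadP HW0 HWr HWc Hdf Hdg HLf HLg n0 fx0 (Hin x0 fx0)).
move=> xs fs hopt hstr.
exact: (part2_final RadP HW0 HWr HWc Hdf Hdg HLf HLg n0 HE Esym Econn fs hopt hstr (Hin xs fs)).
Qed.
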